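(* For every real $\mu$ and every morphism $(\rho,\chi):(\Sigma,U)\to(\widetilde\Sigma,\widetilde U)$ of $\mathsf{Cauchy}(\mathbb{M}^2)$, $$\eta_{(\widetilde\Sigma,\widetilde U)}\circ\mathfrak{D}^{(\mu,0)}\chi=\mathfrak{D}^{(\mu)}_\ell(\rho,\chi)\circ\eta_{(\Sigma,U)}\quad\text{as maps }\mathfrak{D}(U)\to\mathfrak{D}(\widetilde\Sigma).$$
   Context: $\mathbb{M}^2$ is $\mathbb{R}^2$ with null coordinates $u=t-x$, $v=t+x$, metric $du\,dv$, orientation $dt\wedge dx$, time-orientation $\partial_t$. $\mathsf{Cauchy}(\mathbb{M}^2)$ has objects $(\Sigma,U)$ with $U\subseteq\mathbb{M}^2$ open and causally convex and $\Sigma$ a (smooth spacelike) Cauchy surface of $U$; a morphism $(\rho,\chi):(\Sigma,U)\to(\widetilde\Sigma,\widetilde U)$ is a conformally admissible embedding $\chi:U\to\widetilde U$ (smooth embedding with open causally convex image preserving orientation, time-orientation and the conformal class of the metric) restricting to an orientation-preserving embedding $\rho:\Sigma\to\widetilde\Sigma$. Such $\chi$ satisfies $\chi^*du=\omega_\ell\,du$, $\chi^*dv=\omega_r\,dv$ for positive smooth functions $\omega_\ell,\omega_r$ on $U$. Each Cauchy surface carries the coordinate $s$ given by restricting $(u,v)\mapsto-u$. Maps: $\mathfrak{D}^{(\mu,0)}\chi(h):=(\omega_\ell^{\mu-1}\omega_r^{-1}h)\circ\chi^{-1}$ on $\chi(U)$, extended by zero, for $h\in\mathfrak{D}(U)=C_c^\infty(U)$;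 $\mathfrak{D}^{(\mu)}_\ell(\rho,\chi)(f):=(\omega_\ell|_\Sigma^{\mu-1}f)\circ\rho^{-1}$ on $\rho(\Sigma)$, extended by zero, for $f\in\mathfrak{D}(\Sigma)$; and $(\eta_{(\Sigma,U)}h)(s):=\int_{\mathbb{R}}h(-s,v)\,dv$ (with $h$ extended by zero outside $U$), regarded as a function on $\Sigma$ via the coordinate $s$. *)

(* Defs.v *)
From Coquelicot Require Import Coquelicot.
From Stdlib Require Import Reals List ClassicalEpsilon.
Open Scope R_scope.

Definition pt := (R * R)%type.
Definition tc (p : pt) : R := fst p.
Definition xc (p : pt) : R := snd p.
Definition uc (p : pt) : R := tc p - xc p.
Definition vc (p : pt) : R := tc p + xc p.
Definition pt_uv (u v : R) : pt := ((u + v) / 2, (v - u) / 2).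

(* tangent vectors X = (X^t, X^x); du, dv and the metric g = du dv
   (symmetrised), i.e. g(X,X) = du(X) dv(X) = (X^t)^2 - (X^x)^2 *)
Definition du (X : pt) : R := fst X - snd X.
Definition dv (X : pt) : R := fst X + snd X.
Definition gM (X Y : pt) : R := (du X * dv Y + dv X * du Y) / 2.
(* future-directed timelike (time-orientation given by d/dt) *)
Definition future_timelike (X : pt) : Prop := gM X X > 0 /\ fst X > 0.

Definition Dt (f : pt -> R) (p : pt) : R := Derive (fun t => f (t, snd p)) (fst p).
Definition Dx (f : pt -> R) (p : pt) : R := Derive (fun x => f (fst p, x)) (snd p).
(* iterated partial derivative along a word of directions (true = t, false = x) *)
Fixpoint dpart (w : list bool) (f : pt -> R) : pt -> R :=
  match w with
  | nil => f
  | true :: w' => Dt (dpart w' f)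
  | false :: w' => Dx (dpart w' f)
  end.
Definition smooth_on (U : pt -> Prop) (f : pt -> R) : Prop :=
  forall (w : list bool) (p : pt), U p ->
    ex_derive (fun t => dpart w f (t, snd p)) (fst p) /\
    ex_derive (fun x => dpart w f (fst p, x)) (snd p) /\
    continuous (dpart w f) p.
Definition smooth1 (f : R -> R) : Prop := forall (n : nat) (a : R), ex_derive_n f n a.

Definition causal_le (p q : pt) : Prop := uc p <= uc q /\ vc p <= vc q.
Definition causally_convex (U : pt -> Prop) : Prop :=
  forall p q r, U p -> U q -> causal_le p r -> causal_le r q -> U r.

Definition compact2 (K : pt -> Prop) : Prop :=
  forall (I : Type) (O : I -> pt -> Prop),
    (forall i, open (O i)) -> (forall p, K p -> exists i, O i p) ->
    exists l : list I, forall p, K p -> exists i, In i l /\ O i p.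

Definition smooth_curve (s : R -> pt) : Prop :=
  smooth1 (fun a => fst (s a)) /\ smooth1 (fun a => snd (s a)).
Definition velocity (s : R -> pt) (a : R) : pt :=
  (Derive (fun b => fst (s b)) a, Derive (fun b => snd (s b)) a).

(* Σ is a smooth embedded spacelike 1-dimensional submanifold of R^2:
   locally (in some open W around each of its points) Σ ∩ W is the image of
   a smooth injective curve with spacelike velocity which is a homeomorphism
   onto Σ ∩ W (up to reparametrisation every open interval is R). *)
Definition spacelike_hypersurface (S : pt -> Prop) : Prop :=
  forall p, S p -> exists (W : pt -> Prop) (s : R -> pt),
    open W /\ W p /\ smooth_curve s /\
    (forall a, gM (velocity s a) (velocity s a) < 0) /\
    (forall a b, s a = s b -> a = b) /\
    (forall a, S (s a) /\ W (s a)) /\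
    (forall q, S q -> W q -> exists a, s a = q) /\
    (forall a eps, eps > 0 -> exists del, del > 0 /\ forall b,
        Rabs (fst (s b) - fst (s a)) < del -> Rabs (snd (s b) - snd (s a)) < del ->
        Rabs (b - a) < eps).

Definition inext_timelike_curve (U : pt -> Prop) (c : R -> pt) : Prop :=
  smooth_curve c /\
  (forall a, future_timelike (velocity c a)) /\
  (forall a, U (c a)) /\
  ~ (exists p, U p /\ filterlim c (Rbar_locally p_infty) (locally p)) /\
  ~ (exists p, U p /\ filterlim c (Rbar_locally m_infty) (locally p)).

Definition cauchy_in (S U : pt -> Prop) : Prop :=
  forall c, inext_timelike_curve U c ->
    exists a, S (c a) /\ forall b, S (c b) -> b = a.

Definition cauchy_object (S U : pt -> Prop) : Prop :=
  open U /\ causally_convex U /\ (forall p, S p -> U p) /\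
  spacelike_hypersurface S /\ cauchy_in S U.

Definition dchi (chi : pt -> pt) (p X : pt) : pt :=
  (fst X * Dt (fun q => fst (chi q)) p + snd X * Dx (fun q => fst (chi q)) p,
   fst X * Dt (fun q => snd (chi q)) p + snd X * Dx (fun q => snd (chi q)) p).
Definition jac_det (chi : pt -> pt) (p : pt) : R :=
  Dt (fun q => fst (chi q)) p * Dx (fun q => snd (chi q)) p -
  Dx (fun q => fst (chi q)) p * Dt (fun q => snd (chi q)) p.

Definition conf_admissible (chi : pt -> pt) (U Ut : pt -> Prop) : Prop :=
  smooth_on U (fun q => fst (chi q)) /\ smooth_on U (fun q => snd (chi q)) /\
  (* embedding: injective immersion, homeomorphism onto its image *)
  (forall p q, U p -> U q -> chi p = chi q -> p = q) /\
  (forall p, U p -> jac_det chi p <> 0) /\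
  (forall p eps, U p -> eps > 0 -> exists del, del > 0 /\ forall q, U q ->
      Rabs (fst (chi q) - fst (chi p)) < del -> Rabs (snd (chi q) - snd (chi p)) < del ->
      Rabs (fst q - fst p) < eps /\ Rabs (snd q - snd p) < eps) /\
  (forall p, U p -> Ut (chi p)) /\
  open (fun q => exists p, U p /\ chi p = q) /\
  causally_convex (fun q => exists p, U p /\ chi p = q) /\
  (forall p, U p -> jac_det chi p > 0) /\
  (forall p X, U p -> future_timelike X -> future_timelike (dchi chi p X)) /\
  (exists Om : pt -> R, forall p, U p -> Om p > 0 /\
      forall X Y, gM (dchi chi p X) (dchi chi p Y) = Om p * gM X Y).

(* coordinate s on Cauchy surfaces: restriction of (u,v) |-> -u *)
Definition s_coord (p : pt) : R := - uc p.

(* morphisms (rho, chi) : (Σ,U) -> (Σt,Ut); rho is the restriction of chi to Σ,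
   required to land in Σt and to be orientation preserving (Σ oriented by s) *)
Definition cauchy_morphism (S U St Ut : pt -> Prop) (chi : pt -> pt) : Prop :=
  conf_admissible chi U Ut /\
  (forall p, S p -> St (chi p)) /\
  (forall p, S p -> exists del, del > 0 /\ forall q q', S q -> S q' ->
      Rabs (fst q - fst p) < del -> Rabs (snd q - snd p) < del ->
      Rabs (fst q' - fst p) < del -> Rabs (snd q' - snd p) < del ->
      s_coord q < s_coord q' -> s_coord (chi q) < s_coord (chi q')).

Definition pullback_du (chi : pt -> pt) (U : pt -> Prop) (oml : pt -> R) : Prop :=
  forall p X, U p -> du (dchi chi p X) = oml p * du X.
Definition pullback_dv (chi : pt -> pt) (U : pt -> Prop) (omr : pt -> R) : Prop :=
  forall p X, U p -> dv (dchi chi p X) = omr p * dv X.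

(* h ∈ D(U) = C_c^∞(U), represented by its extension by zero to R^2 *)
Definition test_function (U : pt -> Prop) (h : pt -> R) : Prop :=
  smooth_on (fun _ => True) h /\
  exists K : pt -> Prop, compact2 K /\ (forall p, K p -> U p) /\
    (forall p, ~ K p -> h p = 0).

(* pushforward along chi restricted to A: (f ∘ chi^{-1}) on chi(A), 0 elsewhere *)
Definition push (A : pt -> Prop) (chi : pt -> pt) (f : pt -> R) (q : pt) : R :=
  match excluded_middle_informative (exists p, A p /\ chi p = q) with
  | left H => f (proj1_sig (constructive_indefinite_description _ H))
  | right _ => 0
  end.

Definition D_mu0 (mu : R) (U : pt -> Prop) (chi : pt -> pt) (oml omr : pt -> R)
  (h : pt -> R) : pt -> R :=
  push U chi (fun p => Rpower (oml p) (mu - 1) * / omr p * h p).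

(* D^{(mu)}_l (rho,chi) (f) = (oml|_Σ^{mu-1} f) ∘ rho^{-1} on rho(Σ), extended by 0;
   functions on Σ are represented as functions on R^2 evaluated on Σ *)
Definition D_ell (mu : R) (S : pt -> Prop) (chi : pt -> pt) (oml : pt -> R)
  (f : pt -> R) : pt -> R :=
  push S chi (fun p => Rpower (oml p) (mu - 1) * f p).

(* (eta h)(s) = ∫_R h(-s, v) dv (h in null coordinates), regarded as a function
   on the Cauchy surface via s = -u: its value at p ∈ Σ is ∫ h(u(p), v) dv *)
Definition eta (h : pt -> R) (p : pt) : R :=
  RInt_gen (fun w => h (pt_uv (uc p) w)) (Rbar_locally m_infty) (Rbar_locally p_infty).

(* Main.v *)
Require Import Defs.
From Coquelicot Require Import Coquelicot.
From Stdlib Require Import Reals Lra Classical ClassicalEpsilon FunctionalExtensionality List.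
Require Import Defs.
Open Scope R_scope.

Fixpoint Cn (n : nat) (f : R -> R) : Prop :=
  match n with
  | O => True
  | S m => (forall x, ex_derive f x) /\ Cn m (Derive f)
  end.
Definition Cinf (f : R -> R) : Prop := forall n, Cn n f.

Lemma Cn_ext n f g : (forall x, f x = g x) -> Cn n f -> Cn n g.
Proof. intros H; replace g with f; auto. apply functional_extensionality; auto. Qed.

Lemma Cn_le n f : Cn (S n) f -> Cn n f.
Proof.
  revert f; induction n as [|n IH]; intros f H; simpl; auto.
  destruct H as [H1 H2]. split; auto.
Qed.

Lemma Cn_ex n f : Cn (S n) f -> forall x, ex_derive f x.
Proof. intros [H _]; auto. Qed.

Lemma Cn_plus n f g : Cn n f -> Cn n g -> Cn n (fun x => f x + g x).
Proof.
  revert f g; induction n as [|n IH]; intros f g Hf Hg; simpl; auto.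
  destruct Hf as [Hf1 Hf2]; destruct Hg as [Hg1 Hg2]. split.
  - intros x; apply (ex_derive_plus f g); auto.
  - apply Cn_ext with (fun x => Derive f x + Derive g x).
    + intros x; rewrite Derive_plus; auto.
    + apply IH; auto.
Qed.

Lemma Cn_const n c : Cn n (fun _ => c).
Proof.
  induction n as [|n IH]; simpl; auto. split.
  - intros; apply ex_derive_const.
  - apply Cn_ext with (fun _ => 0). intros; rewrite Derive_const; auto.
    clear IH; induction n; simpl; auto. split. intros; apply ex_derive_const.
    apply Cn_ext with (fun _ => 0); auto. intros; rewrite Derive_const; auto.
Qed.

Lemma Cn_mult n f g : Cn n f -> Cn n g -> Cn n (fun x => f x * g x).
Proof.
  revert f g; induction n as [|n IH]; intros f g Hf Hg; simpl; auto.
  pose proof Hf as Hf'. pose proof Hg as Hg'.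
  apply Cn_le in Hf'. apply Cn_le in Hg'.
  destruct Hf as [Hf1 Hf2]; destruct Hg as [Hg1 Hg2]. split.
  - intros x; apply (ex_derive_mult f g); auto.
  - apply Cn_ext with (fun x => Derive f x * g x + f x * Derive g x).
    + intros x; rewrite Derive_mult; auto.
    + apply Cn_plus; apply IH; auto.
Qed.

Lemma Cn_id n : Cn n (fun x => x).
Proof.
  destruct n; simpl; auto. split.
  - intros; apply ex_derive_id.
  - apply Cn_ext with (fun _ => 1). intros; rewrite Derive_id; auto. apply Cn_const.
Qed.

Lemma Cinf_exp : Cinf exp.
Proof.
  intros n; induction n as [|n IH]; simpl; auto. split.
  - intros x; eexists; apply is_derive_exp.
  - apply Cn_ext with exp; auto. intros x; symmetry; apply is_derive_unique, is_derive_exp.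
Qed.

Lemma Cn_comp n f g : Cinf f -> Cn n g -> Cn n (fun x => f (g x)).
Proof.
  revert f g; induction n as [|n IH]; intros f g Hf Hg; simpl; auto.
  pose proof Hg as Hg'. apply Cn_le in Hg'.
  destruct Hg as [Hg1 Hg2]. assert (Hf1 : forall x, ex_derive f x) by (apply (Cn_ex 0), Hf).
  assert (Hf2 : Cinf (Derive f)) by (intros k; apply (Hf (S k))). split.
  - intros x; apply (ex_derive_comp f g); auto.
  - apply Cn_ext with (fun x => Derive g x * Derive f (g x)).
    + intros x; rewrite (Derive_comp f g); auto.
    + apply Cn_mult; auto.
Qed.

Lemma Cn_inv n f : (forall x, f x <> 0) -> Cn n f -> Cn n (fun x => / f x).
Proof.
  intros Hnz; induction n as [|n IH]; intros Hf; simpl; auto.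
  pose proof Hf as Hf'. apply Cn_le in Hf'.
  destruct Hf as [Hf1 Hf2]. split.
  - intros x; apply ex_derive_inv; auto.
  - apply Cn_ext with (fun x => (- Derive f x) * ((/ f x) * (/ f x))).
    + intros x; rewrite Derive_inv; auto. field. auto.
    + apply Cn_mult. apply Cn_ext with (fun x => -1 * Derive f x). intros; ring.
      apply Cn_mult; auto. apply Cn_const. apply Cn_mult; auto.
Qed.

Lemma Cn_Derive_n n f : Cn (S n) f -> forall x, ex_derive (Derive_n f n) x.
Proof.
  revert f; induction n as [|n IH]; intros f Hf x.
  - simpl; apply Hf.
  - destruct Hf as [Hf1 Hf2].
    apply ex_derive_ext with (Derive_n (Derive f) n).
    + intros t. transitivity (Derive_n (Derive_n f 1) n t).
      apply Derive_n_ext; intros; reflexivity.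
      rewrite Derive_n_comp. replace (n + 1)%nat with (S n) by (rewrite Nat.add_comm; reflexivity). reflexivity.
    + apply IH; auto.
Qed.

Lemma Cinf_smooth1 f : Cinf f -> smooth1 f.
Proof. intros H n a. destruct n; simpl; auto. apply (Cn_Derive_n n f (H (S n))). Qed.

Lemma Cinf_plus f g : Cinf f -> Cinf g -> Cinf (fun x => f x + g x).
Proof. intros A B n; apply Cn_plus; auto. Qed.
Lemma Cinf_mult f g : Cinf f -> Cinf g -> Cinf (fun x => f x * g x).
Proof. intros A B n; apply Cn_mult; auto. Qed.
Lemma Cinf_const c : Cinf (fun _ => c).
Proof. intros n; apply Cn_const. Qed.
Lemma Cinf_id : Cinf (fun x => x).
Proof. intros n; apply Cn_id. Qed.
Lemma Cinf_comp f g : Cinf f -> Cinf g -> Cinf (fun x => f (g x)).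
Proof. intros A B n; apply Cn_comp; auto. Qed.
Lemma Cinf_inv f : (forall x, f x <> 0) -> Cinf f -> Cinf (fun x => / f x).
Proof. intros A B n; apply Cn_inv; auto. Qed.
Lemma Cinf_ext f g : (forall x, f x = g x) -> Cinf f -> Cinf g.
Proof. intros E A n; apply Cn_ext with f; auto. Qed.
Lemma Cinf_ex f : Cinf f -> forall x, ex_derive f x.
Proof. intros H; apply (Cn_ex 0), H. Qed.

Lemma locally_pt (p : pt) (P : pt -> Prop) :
  locally p P <-> exists eps : posreal, forall q : pt,
    Rabs (fst q - fst p) < eps -> Rabs (snd q - snd p) < eps -> P q.
Proof.
  split.
  - intros [eps H]. exists eps. intros q H1 H2. apply H. split; assumption.
  - intros [eps H]. exists eps. intros q [H1 H2]. apply H; assumption.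
Qed.

Lemma locally_R (x : R) (P : R -> Prop) :
  locally x P <-> exists eps : posreal, forall y, Rabs (y - x) < eps -> P y.
Proof.
  split.
  - intros [eps H]. exists eps. intros y H1. apply H. exact H1.
  - intros [eps H]. exists eps. intros y H1. apply H; exact H1.
Qed.

Lemma uc_pt_uv u v : uc (pt_uv u v) = u.
Proof. unfold uc, tc, xc, pt_uv; simpl; field. Qed.
Lemma vc_pt_uv u v : vc (pt_uv u v) = v.
Proof. unfold vc, tc, xc, pt_uv; simpl; field. Qed.
Lemma pt_uv_eta p : pt_uv (uc p) (vc p) = p.
Proof. destruct p as [t x]; unfold pt_uv, uc, vc, tc, xc; simpl; f_equal; field. Qed.
Lemma pt_eq_uv p q : uc p = uc q -> vc p = vc q -> p = q.
Proof. intros H1 H2. rewrite <- (pt_uv_eta p), <- (pt_uv_eta q), H1, H2; auto. Qed.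

Lemma exp_gt_any N : exists M, forall t, M < t -> N < exp t.
Proof.
  exists (ln (Rabs N + 1)). intros t Ht.
  apply exp_increasing in Ht. rewrite exp_ln in Ht by (pose proof (Rabs_pos N); lra).
  pose proof (Rle_abs N). lra.
Qed.

Lemma exp_lt_eps eps : 0 < eps -> exists M, forall t, t < M -> exp t < eps.
Proof.
  intros He. exists (ln eps). intros t Ht. apply exp_increasing in Ht. rewrite exp_ln in Ht; auto.
Qed.

Definition reparam_props (a b : Rbar) (phi : R -> R) : Prop :=
  Cinf phi /\ (forall t, 0 < Derive phi t) /\
  (forall t, Rbar_lt a (phi t) /\ Rbar_lt (phi t) b) /\
  (forall s : R, Rbar_lt a s -> Rbar_lt s b -> exists t, phi t = s) /\
  (b = p_infty -> forall N, exists M, forall t, M < t -> N < phi t) /\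
  (forall bb : R, b = Finite bb -> forall eps, 0 < eps -> exists M, forall t, M < t -> Rabs (phi t - bb) < eps) /\
  (a = m_infty -> forall N, exists M, forall t, t < M -> phi t < N) /\
  (forall aa : R, a = Finite aa -> forall eps, 0 < eps -> exists M, forall t, t < M -> Rabs (phi t - aa) < eps).

Lemma Derive_pos_of f df : (forall t, is_derive f t (df t)) -> (forall t, 0 < df t) ->
  forall t, 0 < Derive f t.
Proof. intros H1 H2 t. rewrite (is_derive_unique f t (df t)); auto. Qed.

Lemma reparam (a b : Rbar) : Rbar_lt a b -> exists phi, reparam_props a b phi.
Proof.
  intros Hab. destruct a as [a0| |]; destruct b as [b0| |]; simpl in Hab; try contradiction.
  -
    exists (fun t => a0 + (b0 - a0) / (1 + exp (- t))).
    assert (Hp : forall t, 0 < 1 + exp (- t)) by (intros t; pose proof (exp_pos (-t)); lra).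
    refine (conj _ (conj _ (conj _ (conj _ (conj _ (conj _ (conj _ _))))))).
    + apply Cinf_plus. apply Cinf_const. apply Cinf_mult. apply Cinf_const.
      apply Cinf_inv. intros t; specialize (Hp t); lra.
      apply Cinf_plus. apply Cinf_const. apply Cinf_comp. apply Cinf_exp.
      apply Cinf_ext with (fun x => -1 * x). intros; ring. apply Cinf_mult. apply Cinf_const. apply Cinf_id.
    + apply Derive_pos_of with (fun t => (b0 - a0) * exp (-t) / (1 + exp (-t))^2).
      intros t. auto_derive. specialize (Hp t); lra. field. specialize (Hp t); lra.
      intros t. specialize (Hp t). pose proof (exp_pos (-t)).
      apply Rdiv_lt_0_compat. apply Rmult_lt_0_compat; lra. apply pow_lt; lra.
    + intros t; simpl. specialize (Hp t). assert (0 < (b0 - a0) / (1 + exp (- t))).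
      apply Rdiv_lt_0_compat; lra. split. lra. pose proof (exp_pos (-t)).
      assert ((b0 - a0) / (1 + exp (- t)) < b0 - a0). 
      apply Rmult_lt_reg_r with (1 + exp (-t)); auto. unfold Rdiv. rewrite Rmult_assoc, Rinv_l by lra. nra. lra.
    + intros s H1 H2; simpl in H1, H2. exists (- ln ((b0 - s) / (s - a0))).
      rewrite Ropp_involutive, exp_ln. field. split; lra. apply Rdiv_lt_0_compat; lra.
    + discriminate.
    + intros bb Hbb eps He. injection Hbb as <-.
      destruct (exp_lt_eps (eps / (b0 - a0))) as [M HM]. apply Rdiv_lt_0_compat; lra.
      exists (- M). intros t Ht. assert (- t < M) by lra. specialize (HM _ H).
      specialize (Hp t). pose proof (exp_pos (-t)).
      replace (a0 + (b0 - a0) / (1 + exp (- t)) - b0) with (- ((b0 - a0) * exp (-t) / (1 + exp (-t)))) by (field; lra).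
      rewrite Rabs_Ropp, Rabs_right.
      2: { apply Rle_ge, Rlt_le, Rdiv_lt_0_compat; [apply Rmult_lt_0_compat|]; lra. }
      apply Rle_lt_trans with ((b0 - a0) * exp (-t)).
      unfold Rdiv. rewrite <- (Rmult_1_r ((b0 - a0) * exp (-t))) at 2. apply Rmult_le_compat_l.
      apply Rlt_le, Rmult_lt_0_compat; lra. rewrite <- Rinv_1. apply Rinv_le_contravar; lra.
      apply Rmult_lt_reg_r with (/ (b0 - a0)). apply Rinv_0_lt_compat; lra.
      replace ((b0 - a0) * exp (- t) * / (b0 - a0)) with (exp (-t)) by (field; lra). exact HM.
    + discriminate.
    + intros aa Haa eps He. injection Haa as <-.
      destruct (exp_lt_eps (eps / (b0 - a0))) as [M HM]. apply Rdiv_lt_0_compat; lra.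
      exists M. intros t Ht. specialize (HM _ Ht).
      specialize (Hp t). pose proof (exp_pos (-t)). pose proof (exp_pos t).
      replace (a0 + (b0 - a0) / (1 + exp (- t)) - a0) with ((b0 - a0) / (1 + exp (-t))) by (field; lra).
      rewrite Rabs_right.
      2: { apply Rle_ge, Rlt_le, Rdiv_lt_0_compat; lra. }
      apply Rle_lt_trans with ((b0 - a0) * exp t).
      unfold Rdiv. apply Rmult_le_compat_l. lra.
      rewrite <- (Rinv_inv (exp t)). apply Rinv_le_contravar. apply Rinv_0_lt_compat; lra.
      rewrite <- exp_Ropp. lra.
      apply Rmult_lt_reg_r with (/ (b0 - a0)). apply Rinv_0_lt_compat; lra.
      replace ((b0 - a0) * exp t * / (b0 - a0)) with (exp t) by (field; lra). exact HM.
  -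
    exists (fun t => a0 + exp t). refine (conj _ (conj _ (conj _ (conj _ (conj _ (conj _ (conj _ _))))))).
    + apply Cinf_plus. apply Cinf_const. apply Cinf_exp.
    + apply Derive_pos_of with exp. intros t; auto_derive; auto; ring. apply exp_pos.
    + intros t; simpl. pose proof (exp_pos t); split; auto; lra.
    + intros s H1 _; simpl in H1. exists (ln (s - a0)). rewrite exp_ln; lra.
    + intros _ N. destruct (exp_gt_any (N - a0)) as [M HM]. exists M. intros t Ht. specialize (HM t Ht); lra.
    + discriminate.
    + discriminate.
    + intros aa Haa eps He. injection Haa as <-. destruct (exp_lt_eps eps He) as [M HM].
      exists M. intros t Ht. specialize (HM t Ht). pose proof (exp_pos t).
      replace (a0 + exp t - a0) with (exp t) by ring. rewrite Rabs_right; lra.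
  -
    exists (fun t => b0 - exp (- t)). refine (conj _ (conj _ (conj _ (conj _ (conj _ (conj _ (conj _ _))))))).
    + apply Cinf_plus. apply Cinf_const. apply Cinf_ext with (fun t => -1 * exp (-1 * t)).
      intros x; replace (-1 * x) with (- x) by ring; ring. apply Cinf_mult. apply Cinf_const.
      apply Cinf_comp. apply Cinf_exp. apply Cinf_mult. apply Cinf_const. apply Cinf_id.
    + apply Derive_pos_of with (fun t => exp (-t)). intros t; auto_derive; auto; ring.
      intros; apply exp_pos.
    + intros t; simpl. pose proof (exp_pos (-t)); split; auto; lra.
    + intros s _ H2; simpl in H2. exists (- ln (b0 - s)). rewrite Ropp_involutive, exp_ln; lra.
    + discriminate.
    + intros bb Hbb eps He. injection Hbb as <-. destruct (exp_lt_eps eps He) as [M HM].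
      exists (- M). intros t Ht. assert (- t < M) by lra. specialize (HM _ H). pose proof (exp_pos (-t)).
      replace (b0 - exp (- t) - b0) with (- exp (-t)) by ring. rewrite Rabs_Ropp, Rabs_right; lra.
    + intros _ N. destruct (exp_gt_any (b0 - N)) as [M HM]. exists (- M). intros t Ht.
      assert (M < - t) by lra. specialize (HM _ H); lra.
    + discriminate.
  -
    exists (fun t => t). refine (conj _ (conj _ (conj _ (conj _ (conj _ (conj _ (conj _ _))))))).
    + apply Cinf_id.
    + apply Derive_pos_of with (fun _ => 1). intros t; auto_derive; auto. intros; lra.
    + intros t; simpl; auto.
    + intros s _ _. exists s; auto.
    + intros _ N. exists N. auto.
    + discriminate.
    + intros _ N. exists N. auto.
    + discriminate.
Qed.

Definition tl (p q : pt) : Prop := uc p < uc q /\ vc p < vc q.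

Lemma cont_eps (f : R -> R) x : continuous f x ->
  forall eps, 0 < eps -> exists d, 0 < d /\ forall y, Rabs (y - x) < d -> Rabs (f y - f x) < eps.
Proof.
  intros H eps He.
  assert (H0 : locally (f x) (fun z => Rabs (z - f x) < eps)).
  { apply locally_R. exists (mkposreal eps He). auto. }
  specialize (H _ H0). apply locally_R in H. destruct H as [d Hd].
  exists d. split. apply cond_pos. exact Hd.
Qed.

Lemma cont_pt_eps (f : pt -> R) p : continuous f p ->
  forall eps, 0 < eps -> exists d, 0 < d /\ forall q, Rabs (fst q - fst p) < d -> Rabs (snd q - snd p) < d -> Rabs (f q - f p) < eps.
Proof.
  intros H eps He.
  assert (H0 : locally (f p) (fun z => Rabs (z - f p) < eps)).
  { apply locally_R. exists (mkposreal eps He). auto. }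
  specialize (H _ H0). apply locally_pt in H. destruct H as [d Hd].
  exists d. split. apply cond_pos. exact Hd.
Qed.

Lemma open_box (U : pt -> Prop) p : open U -> U p ->
  exists d, 0 < d /\ forall q, Rabs (fst q - fst p) < d -> Rabs (snd q - snd p) < d -> U q.
Proof.
  intros HU Hp. specialize (HU p Hp). apply locally_pt in HU. destruct HU as [d Hd].
  exists d; split; [apply cond_pos | exact Hd].
Qed.

Lemma filterlim_pinf_pt (c : R -> pt) p : filterlim c (Rbar_locally p_infty) (locally p) ->
  forall eps, 0 < eps -> exists M, forall t, M < t -> Rabs (fst (c t) - fst p) < eps /\ Rabs (snd (c t) - snd p) < eps.
Proof.
  intros H eps He.
  assert (H0 : locally p (fun q => Rabs (fst q - fst p) < eps /\ Rabs (snd q - snd p) < eps)).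
  { apply locally_pt. exists (mkposreal eps He). simpl; auto. }
  specialize (H _ H0). destruct H as [M HM]. exists M; auto.
Qed.

Lemma filterlim_minf_pt (c : R -> pt) p : filterlim c (Rbar_locally m_infty) (locally p) ->
  forall eps, 0 < eps -> exists M, forall t, t < M -> Rabs (fst (c t) - fst p) < eps /\ Rabs (snd (c t) - snd p) < eps.
Proof.
  intros H eps He.
  assert (H0 : locally p (fun q => Rabs (fst q - fst p) < eps /\ Rabs (snd q - snd p) < eps)).
  { apply locally_pt. exists (mkposreal eps He). simpl; auto. }
  specialize (H _ H0). destruct H as [M HM]. exists M; auto.
Qed.

Lemma eq_of_eps x y : (forall eps, 0 < eps -> Rabs (x - y) < eps) -> x = y.
Proof.
  intros H. destruct (Req_dec x y) as [|Hne]; auto. exfalso.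
  assert (0 < Rabs (x - y)) by (apply Rabs_pos_lt; lra).
  specialize (H _ H0). lra.
Qed.

Section Curve.
Variables (S U : pt -> Prop) (A B : R -> R).
Hypotheses (HU : open U) (HC : causally_convex U) (HS : cauchy_in S U)
  (HA : Cinf A) (HB : Cinf B) (HA' : forall s, 0 < Derive A s) (HB' : forall s, 0 < Derive B s)
  (Hp : forall N, exists M, forall s, M < s -> N < A s + B s)
  (Hm : forall N, exists M, forall s, s < M -> A s + B s < N).

Let g s := pt_uv (A s) (B s).
Let J s := U (g s).

Lemma A_incr : forall s s', s < s' -> A s < A s'.
Proof.
  intros s s' H. apply (incr_function A m_infty p_infty (Derive A)); simpl; auto.
  intros x _ _. apply Derive_correct. apply Cinf_ex; auto.
  intros x _ _. apply HA'.
Qed.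
Lemma B_incr : forall s s', s < s' -> B s < B s'.
Proof.
  intros s s' H. apply (incr_function B m_infty p_infty (Derive B)); simpl; auto.
  intros x _ _. apply Derive_correct. apply Cinf_ex; auto.
  intros x _ _. apply HB'.
Qed.

Lemma g_tl : forall s s', s < s' -> tl (g s) (g s').
Proof. intros s s' H; unfold tl, g; rewrite !uc_pt_uv, !vc_pt_uv; split; [apply A_incr|apply B_incr]; auto. Qed.

Lemma J_convex : forall s1 s s3, J s1 -> J s3 -> s1 <= s <= s3 -> J s.
Proof.
  intros s1 s s3 H1 H3 [Ha Hb]. unfold J in *.
  apply (HC (g s1) (g s3)); auto; unfold causal_le, g; rewrite !uc_pt_uv, !vc_pt_uv.
  - destruct Ha as [Ha|<-]; [pose proof (A_incr _ _ Ha); pose proof (B_incr _ _ Ha)|]; lra.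
  - destruct Hb as [Hb|<-]; [pose proof (A_incr _ _ Hb); pose proof (B_incr _ _ Hb)|]; lra.
Qed.

Lemma g_cont : forall s eps, 0 < eps -> exists d, 0 < d /\ forall s', Rabs (s' - s) < d ->
  Rabs (fst (g s') - fst (g s)) < eps /\ Rabs (snd (g s') - snd (g s)) < eps.
Proof.
  intros s eps He.
  destruct (cont_eps A s (ex_derive_continuous _ _ (Cinf_ex _ HA s)) eps He) as [d1 [Hd1 H1]].
  destruct (cont_eps B s (ex_derive_continuous _ _ (Cinf_ex _ HB s)) eps He) as [d2 [Hd2 H2]].
  exists (Rmin d1 d2). split. apply Rmin_pos; auto.
  intros s' Hs'. specialize (H1 s' (Rlt_le_trans _ _ _ Hs' (Rmin_l _ _))).
  specialize (H2 s' (Rlt_le_trans _ _ _ Hs' (Rmin_r _ _))).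
  unfold g, pt_uv; simpl.
  split.
  - replace ((A s' + B s') / 2 - (A s + B s) / 2) with ((A s' - A s)/2 + (B s' - B s)/2) by field.
    eapply Rle_lt_trans. apply Rabs_triang. unfold Rdiv. rewrite !Rabs_mult.
    rewrite (Rabs_right (/2)) by lra. lra.
  - replace ((B s' - A s') / 2 - (B s - A s) / 2) with ((B s' - B s)/2 + - ((A s' - A s)/2)) by field.
    eapply Rle_lt_trans. apply Rabs_triang. rewrite Rabs_Ropp. unfold Rdiv. rewrite !Rabs_mult.
    rewrite (Rabs_right (/2)) by lra. lra.
Qed.

Lemma J_open : forall s, J s -> exists e, 0 < e /\ forall s', Rabs (s' - s) < e -> J s'.
Proof.
  intros s Hs. destruct (open_box U (g s) HU Hs) as [d [Hd HdU]].
  destruct (g_cont s d Hd) as [e [He He']]. exists e; split; auto.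
  intros s' Hs'. destruct (He' s' Hs'). apply HdU; auto.
Qed.

Lemma J_lt_lub : forall s : R, J s -> Rbar_lt (Glb_Rbar J) s /\ Rbar_lt s (Lub_Rbar J).
Proof.
  intros s Hs. destruct (J_open s Hs) as [e [He He']].
  assert (J1 : J (s - e/2)) by (apply He'; rewrite Rabs_left; lra).
  assert (J2 : J (s + e/2)) by (apply He'; rewrite Rabs_right; lra).
  destruct (Glb_Rbar_correct J) as [Hl _]. destruct (Lub_Rbar_correct J) as [Hu _].
  specialize (Hl _ J1). specialize (Hu _ J2). split.
  - destruct (Glb_Rbar J); simpl in *; auto; lra.
  - destruct (Lub_Rbar J); simpl in *; auto; lra.
Qed.

Lemma J_between : forall s : R, Rbar_lt (Glb_Rbar J) s -> Rbar_lt s (Lub_Rbar J) -> J s.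
Proof.
  intros s H1 H2.
  assert (E1 : exists s1, J s1 /\ s1 <= s).
  { apply NNPP; intros Hn.
    assert (is_lb_Rbar J s).
    { intros x Hx. simpl. apply Rnot_lt_le. intros Hlt. apply Hn. exists x; split; auto; lra. }
    destruct (Glb_Rbar_correct J) as [_ Hg]. specialize (Hg _ H).
    destruct (Glb_Rbar J); simpl in *; auto; lra. }
  assert (E3 : exists s3, J s3 /\ s <= s3).
  { apply NNPP; intros Hn.
    assert (is_ub_Rbar J s).
    { intros x Hx. simpl. apply Rnot_lt_le. intros Hlt. apply Hn. exists x; split; auto; lra. }
    destruct (Lub_Rbar_correct J) as [_ Hg]. specialize (Hg _ H).
    destruct (Lub_Rbar J); simpl in *; auto; lra. }
  destruct E1 as [s1 [Hs1 Hs1']]. destruct E3 as [s3 [Hs3 Hs3']].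
  apply (J_convex s1 s s3); auto.
Qed.

Lemma curve_reparam : forall s0, J s0 -> exists phi : R -> R,
  (forall t, J (phi t)) /\ (forall s, J s -> exists t, phi t = s) /\
  inext_timelike_curve U (fun t => g (phi t)).
Proof.
  intros s0 Hs0.
  set (a := Glb_Rbar J). set (b := Lub_Rbar J).
  assert (Hab : Rbar_lt a b).
  { destruct (J_lt_lub s0 Hs0) as [H1 H2]. fold a b in H1, H2.
    destruct a, b; simpl in *; auto; lra. }
  destruct (reparam a b Hab) as [phi [Hsm [Hd [Hr [Hsurj [Hbinf [Hbfin [Hainf Hafin]]]]]]]].
  exists phi. split; [|split].
  - intros t. apply J_between; apply Hr.
  - intros s Hs. destruct (J_lt_lub s Hs). apply Hsurj; auto.
  - unfold inext_timelike_curve. split; [|split; [|split; [|split]]].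
    + split.
      * apply Cinf_smooth1. apply Cinf_ext with (fun t => (A (phi t) + B (phi t)) * / 2).
        intros t; unfold g, pt_uv; simpl; field.
        apply Cinf_mult. apply Cinf_plus; apply Cinf_comp; auto. apply Cinf_const.
      * apply Cinf_smooth1. apply Cinf_ext with (fun t => (B (phi t) - A (phi t)) * / 2).
        intros t; unfold g, pt_uv; simpl; field.
        apply Cinf_mult. apply Cinf_plus. apply Cinf_comp; auto.
        apply Cinf_ext with (fun t => -1 * A (phi t)). intros; ring.
        apply Cinf_mult. apply Cinf_const. apply Cinf_comp; auto. apply Cinf_const.
    + intros t. unfold velocity.
      assert (EA := Cinf_ex _ HA (phi t)). assert (EB := Cinf_ex _ HB (phi t)).
      assert (Ep := Cinf_ex _ Hsm t).
      assert (D1 : Derive (fun b0 => fst (g (phi b0))) t = Derive phi t * (Derive A (phi t) + Derive B (phi t)) / 2).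
      { apply is_derive_unique. unfold g, pt_uv; simpl. auto_derive. repeat split; auto. change (Derive (fun x => phi x)) with (Derive phi); change (Derive (fun x => A x)) with (Derive A); change (Derive (fun x => B x)) with (Derive B); unfold Rdiv; ring. }
      assert (D2 : Derive (fun b0 => snd (g (phi b0))) t = Derive phi t * (Derive B (phi t) - Derive A (phi t)) / 2).
      { apply is_derive_unique. unfold g, pt_uv; simpl. auto_derive. repeat split; auto. change (Derive (fun x => phi x)) with (Derive phi); change (Derive (fun x => A x)) with (Derive A); change (Derive (fun x => B x)) with (Derive B); unfold Rdiv; ring. }
      rewrite D1, D2. specialize (Hd t). specialize (HA' (phi t)). specialize (HB' (phi t)).
      unfold future_timelike, gM, du, dv; simpl. split.
      * apply Rlt_gt. replace ((Derive phi t * (Derive A (phi t) + Derive B (phi t)) / 2 -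
          Derive phi t * (Derive B (phi t) - Derive A (phi t)) / 2) *
         (Derive phi t * (Derive A (phi t) + Derive B (phi t)) / 2 +
          Derive phi t * (Derive B (phi t) - Derive A (phi t)) / 2) +
         (Derive phi t * (Derive A (phi t) + Derive B (phi t)) / 2 +
          Derive phi t * (Derive B (phi t) - Derive A (phi t)) / 2) *
         (Derive phi t * (Derive A (phi t) + Derive B (phi t)) / 2 -
          Derive phi t * (Derive B (phi t) - Derive A (phi t)) / 2))
         with (2 * ((Derive phi t * Derive A (phi t)) * (Derive phi t * Derive B (phi t)))) by field.
        apply Rdiv_lt_0_compat; [|lra]. apply Rmult_lt_0_compat; [lra|].
        apply Rmult_lt_0_compat; apply Rmult_lt_0_compat; auto.
      * apply Rlt_gt. apply Rdiv_lt_0_compat; [|lra]. apply Rmult_lt_0_compat; lra.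
    + intros t. apply J_between; apply Hr.
    + intros [p [Hpu Hlim]].
      destruct b as [bb| |] eqn:Eb.
      *
        assert (Ep : p = g bb).
        { apply injective_projections; apply eq_of_eps; intros eps He.
          - destruct (filterlim_pinf_pt _ _ Hlim (eps/2)) as [M1 HM1]; [lra|].
            destruct (g_cont bb (eps/2)) as [d [Hd0 Hd1]]; [lra|].
            destruct (Hbfin bb eq_refl d Hd0) as [M2 HM2].
            set (t := Rmax M1 M2 + 1).
            assert (M1 < t) by (unfold t; pose proof (Rmax_l M1 M2); lra).
            assert (M2 < t) by (unfold t; pose proof (Rmax_r M1 M2); lra).
            destruct (HM1 t H). destruct (Hd1 _ (HM2 t H0)).
            replace (fst p - fst (g bb)) with (- (fst (g (phi t)) - fst p) + (fst (g (phi t)) - fst (g bb))) by ring.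
            eapply Rle_lt_trans. apply Rabs_triang. rewrite Rabs_Ropp. eapply Rlt_le_trans; [apply Rplus_lt_compat; eassumption|lra].
          - destruct (filterlim_pinf_pt _ _ Hlim (eps/2)) as [M1 HM1]; [lra|].
            destruct (g_cont bb (eps/2)) as [d [Hd0 Hd1]]; [lra|].
            destruct (Hbfin bb eq_refl d Hd0) as [M2 HM2].
            set (t := Rmax M1 M2 + 1).
            assert (M1 < t) by (unfold t; pose proof (Rmax_l M1 M2); lra).
            assert (M2 < t) by (unfold t; pose proof (Rmax_r M1 M2); lra).
            destruct (HM1 t H). destruct (Hd1 _ (HM2 t H0)).
            replace (snd p - snd (g bb)) with (- (snd (g (phi t)) - snd p) + (snd (g (phi t)) - snd (g bb))) by ring.
            eapply Rle_lt_trans. apply Rabs_triang. rewrite Rabs_Ropp. eapply Rlt_le_trans; [apply Rplus_lt_compat; eassumption|lra]. }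
        subst p. destruct (J_lt_lub bb Hpu) as [_ H2]. fold b in H2. rewrite Eb in H2. simpl in H2. lra.
      * destruct (filterlim_pinf_pt _ _ Hlim 1) as [M1 HM1]; [lra|].
        destruct (Hp (2 * fst p + 2)) as [N1 HN1].
        destruct (Hbinf eq_refl N1) as [M2 HM2].
        set (t := Rmax M1 M2 + 1).
        assert (M1 < t) by (unfold t; pose proof (Rmax_l M1 M2); lra).
        assert (M2 < t) by (unfold t; pose proof (Rmax_r M1 M2); lra).
        destruct (HM1 t H) as [H3 _]. specialize (HN1 _ (HM2 t H0)).
        unfold g, pt_uv in H3; simpl in H3. apply Rabs_def2 in H3. lra.
      * destruct a; simpl in Hab; contradiction.
    + intros [p [Hpu Hlim]].
      destruct a as [aa| |] eqn:Ea.
      * assert (Ep : p = g aa).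
        { apply injective_projections; apply eq_of_eps; intros eps He.
          - destruct (filterlim_minf_pt _ _ Hlim (eps/2)) as [M1 HM1]; [lra|].
            destruct (g_cont aa (eps/2)) as [d [Hd0 Hd1]]; [lra|].
            destruct (Hafin aa eq_refl d Hd0) as [M2 HM2].
            set (t := Rmin M1 M2 - 1).
            assert (t < M1) by (unfold t; pose proof (Rmin_l M1 M2); lra).
            assert (t < M2) by (unfold t; pose proof (Rmin_r M1 M2); lra).
            destruct (HM1 t H). destruct (Hd1 _ (HM2 t H0)).
            replace (fst p - fst (g aa)) with (- (fst (g (phi t)) - fst p) + (fst (g (phi t)) - fst (g aa))) by ring.
            eapply Rle_lt_trans. apply Rabs_triang. rewrite Rabs_Ropp. eapply Rlt_le_trans; [apply Rplus_lt_compat; eassumption|lra].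
          - destruct (filterlim_minf_pt _ _ Hlim (eps/2)) as [M1 HM1]; [lra|].
            destruct (g_cont aa (eps/2)) as [d [Hd0 Hd1]]; [lra|].
            destruct (Hafin aa eq_refl d Hd0) as [M2 HM2].
            set (t := Rmin M1 M2 - 1).
            assert (t < M1) by (unfold t; pose proof (Rmin_l M1 M2); lra).
            assert (t < M2) by (unfold t; pose proof (Rmin_r M1 M2); lra).
            destruct (HM1 t H). destruct (Hd1 _ (HM2 t H0)).
            replace (snd p - snd (g aa)) with (- (snd (g (phi t)) - snd p) + (snd (g (phi t)) - snd (g aa))) by ring.
            eapply Rle_lt_trans. apply Rabs_triang. rewrite Rabs_Ropp. eapply Rlt_le_trans; [apply Rplus_lt_compat; eassumption|lra]. }
        subst p. destruct (J_lt_lub aa Hpu) as [H2 _]. fold a in H2. rewrite Ea in H2. simpl in H2. lra.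
      * simpl in Hab; contradiction.
      * destruct (filterlim_minf_pt _ _ Hlim 1) as [M1 HM1]; [lra|].
        destruct (Hm (2 * fst p - 2)) as [N1 HN1].
        destruct (Hainf eq_refl N1) as [M2 HM2].
        set (t := Rmin M1 M2 - 1).
        assert (t < M1) by (unfold t; pose proof (Rmin_l M1 M2); lra).
        assert (t < M2) by (unfold t; pose proof (Rmin_r M1 M2); lra).
        destruct (HM1 t H) as [H3 _]. specialize (HN1 _ (HM2 t H0)).
        unfold g, pt_uv in H3; simpl in H3. apply Rabs_def2 in H3. lra.
Qed.

Lemma curve_meets : forall s0, J s0 -> exists s, J s /\ S (g s).
Proof.
  intros s0 Hs0. destruct (curve_reparam s0 Hs0) as [phi [H1 [H2 H3]]].
  destruct (HS _ H3) as [t [Ht _]]. exists (phi t); auto.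
Qed.

Lemma curve_unique : forall s1 s2, J s1 -> J s2 -> S (g s1) -> S (g s2) -> s1 = s2.
Proof.
  intros s1 s2 J1 J2 S1 S2. destruct (curve_reparam s1 J1) as [phi [H1 [H2 H3]]].
  destruct (HS _ H3) as [t [Ht Hu]].
  destruct (H2 s1 J1) as [t1 <-]. destruct (H2 s2 J2) as [t2 <-].
  rewrite (Hu t1 S1), (Hu t2 S2). auto.
Qed.

End Curve.

Lemma Cinf_affine c k : Cinf (fun s => c + k * s).
Proof. apply Cinf_plus. apply Cinf_const. apply Cinf_mult. apply Cinf_const. apply Cinf_id. Qed.

Lemma Derive_affine c k s : Derive (fun s => c + k * s) s = k.
Proof. apply is_derive_unique. auto_derive; auto; ring. Qed.

Lemma line_p u0 v0 a b : 0 < a -> 0 < b ->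
  forall N, exists M, forall s, M < s -> N < (u0 + a * s) + (v0 + b * s).
Proof.
  intros Ha Hb N. exists ((N - u0 - v0) / (a + b)). intros s Hs.
  apply Rmult_lt_compat_r with (r := a + b) in Hs; [|lra].
  unfold Rdiv in Hs. rewrite Rmult_assoc, Rinv_l in Hs by lra. lra.
Qed.

Lemma line_m u0 v0 a b : 0 < a -> 0 < b ->
  forall N, exists M, forall s, s < M -> (u0 + a * s) + (v0 + b * s) < N.
Proof.
  intros Ha Hb N. exists ((N - u0 - v0) / (a + b)). intros s Hs.
  apply Rmult_lt_compat_r with (r := a + b) in Hs; [|lra].
  unfold Rdiv in Hs. rewrite Rmult_assoc, Rinv_l in Hs by lra. lra.
Qed.

Section Lines.
Variables (S U : pt -> Prop).
Hypotheses (HU : open U) (HC : causally_convex U) (HS : cauchy_in S U).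

Lemma line_meets u0 v0 a b : 0 < a -> 0 < b -> forall s0,
  U (pt_uv (u0 + a * s0) (v0 + b * s0)) ->
  exists s, U (pt_uv (u0 + a * s) (v0 + b * s)) /\ S (pt_uv (u0 + a * s) (v0 + b * s)).
Proof.
  intros Ha Hb s0 H0.
  apply (curve_meets S U (fun s => u0 + a * s) (fun s => v0 + b * s)) with s0; auto.
  apply Cinf_affine. apply Cinf_affine.
  intros s; rewrite Derive_affine; auto. intros s; rewrite Derive_affine; auto.
  apply line_p; auto. apply line_m; auto.
Qed.

Lemma line_unique u0 v0 a b : 0 < a -> 0 < b -> forall s1 s2,
  U (pt_uv (u0 + a * s1) (v0 + b * s1)) -> U (pt_uv (u0 + a * s2) (v0 + b * s2)) ->
  S (pt_uv (u0 + a * s1) (v0 + b * s1)) -> S (pt_uv (u0 + a * s2) (v0 + b * s2)) -> s1 = s2.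
Proof.
  intros Ha Hb.
  apply (curve_unique S U (fun s => u0 + a * s) (fun s => v0 + b * s)); auto.
  apply Cinf_affine. apply Cinf_affine.
  intros s; rewrite Derive_affine; auto. intros s; rewrite Derive_affine; auto.
  apply line_p; auto. apply line_m; auto.
Qed.

Hypothesis (HSU : forall p, S p -> U p).

Lemma achronal p q : S p -> S q -> tl p q -> False.
Proof.
  intros Sp Sq [H1 H2].
  assert (E0 : pt_uv (uc p + (uc q - uc p) * 0) (vc p + (vc q - vc p) * 0) = p).
  { rewrite !Rmult_0_r, !Rplus_0_r. apply pt_uv_eta. }
  assert (E1 : pt_uv (uc p + (uc q - uc p) * 1) (vc p + (vc q - vc p) * 1) = q).
  { replace (uc p + (uc q - uc p) * 1) with (uc q) by ring.
    replace (vc p + (vc q - vc p) * 1) with (vc q) by ring. apply pt_uv_eta. }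
  assert (0 = 1).
  { apply (line_unique (uc p) (vc p) (uc q - uc p) (vc q - vc p)); try lra;
    rewrite ?E0, ?E1; auto. }
  lra.
Qed.

Lemma cover r : U r -> S r \/ (exists s, S s /\ tl s r) \/ (exists s, S s /\ tl r s).
Proof.
  intros Hr.
  assert (E : forall s, pt_uv (uc r + 1 * s) (vc r + 1 * s) = pt_uv (uc r + s) (vc r + s)).
  { intros; rewrite !Rmult_1_l; auto. }
  destruct (line_meets (uc r) (vc r) 1 1 ltac:(lra) ltac:(lra) 0) as [s [Us Ss]].
  { rewrite !Rmult_0_r, !Rplus_0_r, pt_uv_eta; auto. }
  rewrite E in Ss.
  destruct (Rtotal_order s 0) as [Hs|[Hs|Hs]].
  - right; left. exists (pt_uv (uc r + s) (vc r + s)). split; auto.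
    unfold tl; rewrite uc_pt_uv, vc_pt_uv; lra.
  - left. subst s. rewrite !Rplus_0_r, pt_uv_eta in Ss; auto.
  - right; right. exists (pt_uv (uc r + s) (vc r + s)). split; auto.
    unfold tl; rewrite uc_pt_uv, vc_pt_uv; lra.
Qed.

End Lines.

Lemma tl_trans p q r : tl p q -> tl q r -> tl p r.
Proof. unfold tl; lra. Qed.
Lemma tl_le p q r : tl p q -> causal_le q r -> tl p r.
Proof. unfold tl, causal_le; lra. Qed.
Lemma le_tl p q r : causal_le p q -> tl q r -> tl p r.
Proof. unfold tl, causal_le; lra. Qed.

Section NullMeets.
Variables (S U : pt -> Prop) (p : pt).
Hypotheses (HU : open U) (HC : causally_convex U) (HS : cauchy_in S U)
  (HSU : forall q, S q -> U q) (Hp : U p).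

Let u0 := uc p.
Let pl w := pt_uv u0 w.
Let W w := U (pl w).
Let Pp r := exists s, S s /\ tl s r.
Let Ff r := exists s, S s /\ tl r s.

Hypothesis Hno : forall w, W w -> ~ S (pl w).

Lemma W_conv w1 w w3 : W w1 -> W w3 -> w1 <= w <= w3 -> W w.
Proof.
  intros H1 H3 [Ha Hb]. apply (HC (pl w1) (pl w3)); auto; unfold causal_le, pl;
  rewrite !uc_pt_uv, !vc_pt_uv; lra.
Qed.

Lemma W_open w : W w -> exists e, 0 < e /\ forall w', Rabs (w' - w) < e -> W w'.
Proof.
  intros Hw. destruct (open_box U (pl w) HU Hw) as [d [Hd HdU]].
  exists d; split; auto. intros w' Hw'. apply HdU; unfold pl, pt_uv; simpl.
  - replace ((u0 + w') / 2 - (u0 + w) / 2) with ((w' - w) / 2) by field.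
    unfold Rdiv; rewrite Rabs_mult, (Rabs_right (/2)) by lra. lra.
  - replace ((w' - u0) / 2 - (w - u0) / 2) with ((w' - w) / 2) by field.
    unfold Rdiv; rewrite Rabs_mult, (Rabs_right (/2)) by lra. lra.
Qed.

Lemma PF_cover w : W w -> Pp (pl w) \/ Ff (pl w).
Proof.
  intros Hw. destruct (cover S U HU HC HS (pl w) Hw) as [H|[H|H]]; auto.
  exfalso; apply (Hno w); auto.
Qed.

Lemma PF_disj r : Pp r -> Ff r -> False.
Proof.
  intros [s1 [S1 T1]] [s2 [S2 T2]].
  apply (achronal S U HU HC HS HSU s1 s2); auto. apply tl_trans with r; auto.
Qed.

Lemma P_up w w' : Pp (pl w) -> w <= w' -> Pp (pl w').
Proof.
  intros [s [Ss Ts]] H. exists s; split; auto. unfold tl, pl in *.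
  rewrite uc_pt_uv, vc_pt_uv in *. lra.
Qed.
Lemma F_down w w' : Ff (pl w) -> w' <= w -> Ff (pl w').
Proof.
  intros [s [Ss Ts]] H. exists s; split; auto. unfold tl, pl in *.
  rewrite uc_pt_uv, vc_pt_uv in *. lra.
Qed.
Lemma P_open w : Pp (pl w) -> exists e, 0 < e /\ Pp (pl (w - e)).
Proof.
  intros [s [Ss Ts]]. unfold tl, pl in Ts. rewrite uc_pt_uv, vc_pt_uv in Ts.
  exists ((w - vc s) / 2). split. lra. exists s; split; auto. unfold tl, pl.
  rewrite uc_pt_uv, vc_pt_uv. lra.
Qed.
Lemma F_open w : Ff (pl w) -> exists e, 0 < e /\ Ff (pl (w + e)).
Proof.
  intros [s [Ss Ts]]. unfold tl, pl in Ts. rewrite uc_pt_uv, vc_pt_uv in Ts.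
  exists ((vc s - w) / 2). split. lra. exists s; split; auto. unfold tl, pl.
  rewrite uc_pt_uv, vc_pt_uv. lra.
Qed.

Lemma connected w1 w2 : w1 < w2 -> W w1 -> W w2 -> Ff (pl w1) -> Pp (pl w2) -> False.
Proof.
  intros H12 W1 W2 F1 P2.
  set (Z := fun w => w1 <= w <= w2 /\ Ff (pl w)).
  assert (Hb : bound Z) by (exists w2; intros x [Hx _]; lra).
  assert (Hz : exists x, Z x) by (exists w1; split; [lra|auto]).
  destruct (completeness Z Hb Hz) as [c [Hc1 Hc2]].
  assert (Hc3 : w1 <= c) by (apply Hc1; split; [lra|auto]).
  assert (Hc4 : c <= w2) by (apply Hc2; intros x [Hx _]; lra).
  assert (Wc : W c) by (apply (W_conv w1 c w2); auto).
  destruct (PF_cover c Wc) as [Pc|Fc].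
  - destruct (P_open c Pc) as [e [He Pe]].
    assert (Ex : exists z, Z z /\ c - e < z).
    { apply NNPP; intros Hn. assert (c <= c - e); [|lra].
      apply Hc2. intros x Zx. apply Rnot_lt_le. intros Hl. apply Hn. exists x; auto. }
    destruct Ex as [z [[Hz1 Fz] Hz2]]. apply (PF_disj (pl z)); auto.
    apply P_up with (c - e); auto; lra.
  - destruct (Req_dec c w2) as [E|E].
    + subst c. apply (PF_disj (pl w2)); auto.
    + destruct (F_open c Fc) as [e [He Fe]].
      set (e' := Rmin e (w2 - c)).
      assert (0 < e') by (apply Rmin_pos; lra).
      assert (Z (c + e')).
      { split. split. lra. unfold e'; pose proof (Rmin_r e (w2 - c)); lra.
        apply F_down with (c + e); auto. unfold e'; pose proof (Rmin_l e (w2 - c)); lra. }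
      specialize (Hc1 _ H0). lra.
Qed.

Lemma pl_p : pl (vc p) = p.
Proof. unfold pl, u0. apply pt_uv_eta. Qed.

Lemma Wp : W (vc p).
Proof. unfold W; rewrite pl_p; auto. Qed.

Lemma W_lt_bounds (w : R) : W w -> Rbar_lt (Glb_Rbar W) w /\ Rbar_lt w (Lub_Rbar W).
Proof.
  intros Hs. destruct (W_open w Hs) as [e [He He']].
  assert (J1 : W (w - e/2)) by (apply He'; rewrite Rabs_left; lra).
  assert (J2 : W (w + e/2)) by (apply He'; rewrite Rabs_right; lra).
  destruct (Glb_Rbar_correct W) as [Hl _]. destruct (Lub_Rbar_correct W) as [Hu _].
  specialize (Hl _ J1). specialize (Hu _ J2). split.
  - destruct (Glb_Rbar W); simpl in *; auto; lra.
  - destruct (Lub_Rbar W); simpl in *; auto; lra.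
Qed.

Lemma W_low (x : R) : Rbar_lt (Glb_Rbar W) x -> x <= vc p -> W x.
Proof.
  intros H1 H2.
  assert (E1 : exists s1, W s1 /\ s1 <= x).
  { apply NNPP; intros Hn.
    assert (is_lb_Rbar W x).
    { intros y Hy. simpl. apply Rnot_lt_le. intros Hlt. apply Hn. exists y; split; auto; lra. }
    destruct (Glb_Rbar_correct W) as [_ Hg]. specialize (Hg _ H).
    destruct (Glb_Rbar W); simpl in *; auto; lra. }
  destruct E1 as [s1 [Hs1 Hs1']]. apply (W_conv s1 x (vc p)); auto. apply Wp.
Qed.

Lemma W_high (x : R) : Rbar_lt x (Lub_Rbar W) -> vc p <= x -> W x.
Proof.
  intros H1 H2.
  assert (E1 : exists s1, W s1 /\ x <= s1).
  { apply NNPP; intros Hn.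
    assert (is_ub_Rbar W x).
    { intros y Hy. simpl. apply Rnot_lt_le. intros Hlt. apply Hn. exists y; split; auto; lra. }
    destruct (Lub_Rbar_correct W) as [_ Hg]. specialize (Hg _ H).
    destruct (Lub_Rbar W); simpl in *; auto; lra. }
  destruct E1 as [s1 [Hs1 Hs1']]. apply (W_conv (vc p) x s1); auto. apply Wp.
Qed.

Lemma box_p : exists d, 0 < d /\ forall a b, Rabs a < d -> Rabs b < d -> U (pt_uv (u0 + a) (vc p + b)).
Proof.
  destruct (open_box U p HU Hp) as [d [Hd HdU]]. exists (d). split; auto.
  intros a b Ha Hb.
  assert (E1 : fst p = (u0 + vc p) / 2) by (unfold u0, uc, vc, tc, xc; field).
  assert (E2 : snd p = (vc p - u0) / 2) by (unfold u0, uc, vc, tc, xc; field).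
  apply HdU; rewrite ?E1, ?E2; unfold pt_uv; simpl.
  - replace ((u0 + a + (vc p + b)) / 2 - (u0 + vc p) / 2) with (a/2 + b/2) by field.
    eapply Rle_lt_trans. apply Rabs_triang. unfold Rdiv; rewrite !Rabs_mult, (Rabs_right (/2)) by lra. lra.
  - replace ((vc p + b - (u0 + a)) / 2 - (vc p - u0) / 2) with (b/2 + - (a/2)) by field.
    eapply Rle_lt_trans. apply Rabs_triang. rewrite Rabs_Ropp. unfold Rdiv; rewrite !Rabs_mult, (Rabs_right (/2)) by lra. lra.
Qed.

Lemma past_case : Pp p -> False.
Proof.
  intros Pp0.
  assert (Pp_p : Pp (pl (vc p))) by (rewrite pl_p; auto).
  assert (Hall : forall w, W w -> w <= vc p -> Pp (pl w)).
  { intros w Hw Hle. destruct (PF_cover w Hw) as [H|H]; auto.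
    destruct (Req_dec w (vc p)) as [E|E]. subst; auto.
    exfalso. apply (connected w (vc p)); auto. lra. apply Wp. }
  destruct box_p as [d [Hd Hbox]].
  destruct (W_lt_bounds (vc p) Wp) as [Ha _].
  destruct (Glb_Rbar W) as [a0| |] eqn:Ea.
  - simpl in Ha.
    assert (Na : ~ W a0).
    { intros Wa. destruct (W_lt_bounds a0 Wa) as [H _]. rewrite Ea in H. simpl in H. lra. }
    set (g := fun s => pt_uv (u0 + 1 * s) (a0 + 1 * s)).
    set (sm := Rmin d (vc p - a0)).
    assert (Hsm : 0 < sm) by (apply Rmin_pos; lra).
    assert (Good : forall s, 0 < s < sm -> U (g s) /\ Pp (g s)).
    { intros s [Hs1 Hs2]. unfold sm in Hs1, Hs2.
      assert (Hs3 : s < d) by (pose proof (Rmin_l d (vc p - a0)); lra).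
      assert (Hs4 : s < vc p - a0) by (pose proof (Rmin_r d (vc p - a0)); lra).
      assert (WL : W (a0 + s/2)). { apply W_low. rewrite Ea; simpl; lra. lra. }
      assert (PL : Pp (pl (a0 + s/2))) by (apply Hall; auto; lra).
      assert (LE : causal_le (pl (a0 + s/2)) (g s)).
      { unfold causal_le, pl, g; rewrite !uc_pt_uv, !vc_pt_uv; lra. }
      split.
      - apply (HC (pl (a0 + s/2)) (pt_uv (u0 + s) (vc p + 0))); auto.
        apply Hbox. rewrite Rabs_right; lra. rewrite Rabs_R0; lra.
        unfold causal_le, g; rewrite !uc_pt_uv, !vc_pt_uv; lra.
      - destruct PL as [s0 [S0 T0]]. exists s0; split; auto. apply tl_le with (pl (a0 + s/2)); auto. }
    destruct (Good (sm/2)) as [U0 P0]; [lra|].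
    destruct (line_meets S U HU HC HS u0 a0 1 1 ltac:(lra) ltac:(lra) (sm/2) U0) as [s [Us Ss]].
    assert (Hpos : 0 < s).
    { apply Rnot_le_lt. intros Hle. apply Na. unfold W, pl.
      apply (HC (g s) (g (sm/2))); auto; unfold causal_le, g; rewrite !uc_pt_uv, !vc_pt_uv; lra. }
    assert (Ps : Pp (g s)).
    { destruct (Rlt_dec s sm) as [Hl|Hl]. apply Good; lra.
      destruct P0 as [s0 [S0 T0]]. exists s0; split; auto. apply tl_trans with (g (sm/2)); auto.
      unfold tl, g; rewrite !uc_pt_uv, !vc_pt_uv; lra. }
    destruct Ps as [s0 [S0 T0]]. apply (achronal S U HU HC HS HSU s0 (g s)); auto.
  - simpl in Ha; contradiction.
  - set (g := fun s => pt_uv (u0 + exp s) s).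
    set (s0 := Rmin (ln d) (vc p) - 1).
    assert (Good : forall s, s <= s0 -> U (g s) /\ Pp (g s)).
    { intros s Hs.
      assert (Hs3 : exp s < d).
      { assert (s < ln d) by (pose proof (Rmin_l (ln d) (vc p)); unfold s0 in Hs; lra).
        apply exp_increasing in H. rewrite exp_ln in H; auto. }
      assert (Hs4 : s < vc p) by (pose proof (Rmin_r (ln d) (vc p)); unfold s0 in Hs; lra).
      assert (WL : W (s - 1)). { apply W_low. rewrite Ea; simpl; auto. lra. }
      assert (PL : Pp (pl (s - 1))) by (apply Hall; auto; lra).
      pose proof (exp_pos s).
      assert (LE : causal_le (pl (s - 1)) (g s)).
      { unfold causal_le, pl, g; rewrite !uc_pt_uv, !vc_pt_uv; lra. }
      split.
      - apply (HC (pl (s - 1)) (pt_uv (u0 + exp s) (vc p + 0))); auto.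
        apply Hbox. rewrite Rabs_right; lra. rewrite Rabs_R0; lra.
        unfold causal_le, g; rewrite !uc_pt_uv, !vc_pt_uv; lra.
      - destruct PL as [x [Sx Tx]]. exists x; split; auto. apply tl_le with (pl (s - 1)); auto. }
    destruct (Good s0) as [U0 P0]; [lra|].
    destruct (curve_meets S U (fun s => u0 + exp s) (fun s => s) HU HC HS) with s0 as [s [Us Ss]].
    + apply Cinf_plus. apply Cinf_const. apply Cinf_exp.
    + apply Cinf_id.
    + intros s. replace (Derive (fun s1 => u0 + exp s1) s) with (exp s). apply exp_pos.
      symmetry; apply is_derive_unique; auto_derive; auto; ring.
    + intros s. rewrite Derive_id. lra.
    + intros N. exists (N - u0). intros s Hs. pose proof (exp_pos s). lra.
    + intros N. exists (Rmin 0 (N - u0 - 1)). intros s Hs.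
      assert (exp s < 1). { rewrite <- exp_0. apply exp_increasing. pose proof (Rmin_l 0 (N - u0 - 1)); lra. }
      pose proof (Rmin_r 0 (N - u0 - 1)). lra.
    + exact U0.
    + assert (Ps : Pp (g s)).
      { destruct (Rle_dec s s0) as [Hl|Hl]. apply Good; lra.
        destruct P0 as [x [Sx Tx]]. exists x; split; auto. apply tl_trans with (g s0); auto.
        unfold tl, g; rewrite !uc_pt_uv, !vc_pt_uv.
        assert (exp s0 < exp s) by (apply exp_increasing; lra). lra. }
      destruct Ps as [x [Sx Tx]]. apply (achronal S U HU HC HS HSU x (g s)); auto.
Qed.

Lemma future_case : Ff p -> False.
Proof.
  intros Ff0.
  assert (Ff_p : Ff (pl (vc p))) by (rewrite pl_p; auto).
  assert (Hall : forall w, W w -> vc p <= w -> Ff (pl w)).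
  { intros w Hw Hle. destruct (PF_cover w Hw) as [H|H]; auto.
    destruct (Req_dec w (vc p)) as [E|E]. subst; auto.
    exfalso. apply (connected (vc p) w); auto. lra. apply Wp. }
  destruct box_p as [d [Hd Hbox]].
  destruct (W_lt_bounds (vc p) Wp) as [_ Hb].
  destruct (Lub_Rbar W) as [b0| |] eqn:Eb.
  - simpl in Hb.
    assert (Nb : ~ W b0).
    { intros Wb. destruct (W_lt_bounds b0 Wb) as [_ H]. rewrite Eb in H. simpl in H. lra. }
    set (g := fun s => pt_uv (u0 + 1 * s) (b0 + 1 * s)).
    set (sm := Rmin d (b0 - vc p)).
    assert (Hsm : 0 < sm) by (apply Rmin_pos; lra).
    assert (Good : forall s, - sm < s < 0 -> U (g s) /\ Ff (g s)).
    { intros s [Hs1 Hs2]. unfold sm in Hs1, Hs2.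
      assert (Hs3 : - s < d) by (pose proof (Rmin_l d (b0 - vc p)); lra).
      assert (Hs4 : - s < b0 - vc p) by (pose proof (Rmin_r d (b0 - vc p)); lra).
      assert (WL : W (b0 + s/2)). { apply W_high. rewrite Eb; simpl; lra. lra. }
      assert (PL : Ff (pl (b0 + s/2))) by (apply Hall; auto; lra).
      assert (LE : causal_le (g s) (pl (b0 + s/2))).
      { unfold causal_le, pl, g; rewrite !uc_pt_uv, !vc_pt_uv; lra. }
      split.
      - apply (HC (pt_uv (u0 + s) (vc p + 0)) (pl (b0 + s/2))); auto.
        apply Hbox. rewrite Rabs_left; lra. rewrite Rabs_R0; lra.
        unfold causal_le, g; rewrite !uc_pt_uv, !vc_pt_uv; lra.
      - destruct PL as [s0 [S0 T0]]. exists s0; split; auto. apply le_tl with (pl (b0 + s/2)); auto. }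
    destruct (Good (- sm/2)) as [U0 P0]; [lra|].
    destruct (line_meets S U HU HC HS u0 b0 1 1 ltac:(lra) ltac:(lra) (- sm/2) U0) as [s [Us Ss]].
    assert (Hneg : s < 0).
    { apply Rnot_le_lt. intros Hle. apply Nb. unfold W, pl.
      apply (HC (g (- sm/2)) (g s)); auto; unfold causal_le, g; rewrite !uc_pt_uv, !vc_pt_uv; lra. }
    assert (Ps : Ff (g s)).
    { destruct (Rlt_dec (- sm) s) as [Hl|Hl]. apply Good; lra.
      destruct P0 as [s0 [S0 T0]]. exists s0; split; auto. apply tl_trans with (g (- sm/2)); auto.
      unfold tl, g; rewrite !uc_pt_uv, !vc_pt_uv; lra. }
    destruct Ps as [s0 [S0 T0]]. apply (achronal S U HU HC HS HSU (g s) s0); auto.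
  - set (g := fun s => pt_uv (u0 + -1 * exp (- s)) s).
    set (s0 := Rmax (- ln d) (vc p) + 1).
    assert (Good : forall s, s0 <= s -> U (g s) /\ Ff (g s)).
    { intros s Hs.
      assert (Hs3 : exp (- s) < d).
      { assert (- s < ln d) by (pose proof (Rmax_l (- ln d) (vc p)); unfold s0 in Hs; lra).
        apply exp_increasing in H. rewrite exp_ln in H; auto. }
      assert (Hs4 : vc p < s) by (pose proof (Rmax_r (- ln d) (vc p)); unfold s0 in Hs; lra).
      assert (WL : W (s + 1)). { apply W_high. rewrite Eb; simpl; auto. lra. }
      assert (PL : Ff (pl (s + 1))) by (apply Hall; auto; lra).
      pose proof (exp_pos (- s)).
      assert (LE : causal_le (g s) (pl (s + 1))).
      { unfold causal_le, pl, g; rewrite !uc_pt_uv, !vc_pt_uv; lra. }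
      split.
      - apply (HC (pt_uv (u0 + - exp (- s)) (vc p + 0)) (pl (s + 1))); auto.
        apply Hbox. rewrite Rabs_left; lra. rewrite Rabs_R0; lra.
        unfold causal_le, g; rewrite !uc_pt_uv, !vc_pt_uv; lra.
      - destruct PL as [x [Sx Tx]]. exists x; split; auto. apply le_tl with (pl (s + 1)); auto. }
    destruct (Good s0) as [U0 P0]; [lra|].
    destruct (curve_meets S U (fun s => u0 + -1 * exp (- s)) (fun s => s) HU HC HS) with s0 as [s [Us Ss]].
    + apply Cinf_plus. apply Cinf_const. apply Cinf_mult. apply Cinf_const.
      apply Cinf_comp. apply Cinf_exp. apply Cinf_ext with (fun x => -1 * x). intros; ring.
      apply Cinf_mult. apply Cinf_const. apply Cinf_id.
    + apply Cinf_id.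
    + intros s. replace (Derive (fun s1 => u0 + -1 * exp (- s1)) s) with (exp (- s)). apply exp_pos.
      symmetry; apply is_derive_unique; auto_derive; auto; ring.
    + intros s. rewrite Derive_id. lra.
    + intros N. exists (Rmax 0 (N - u0 + 1)). intros s Hs.
      assert (exp (- s) < 1). { rewrite <- exp_0. apply exp_increasing. pose proof (Rmax_l 0 (N - u0 + 1)); lra. }
      pose proof (Rmax_r 0 (N - u0 + 1)). lra.
    + intros N. exists (N - u0). intros s Hs. pose proof (exp_pos (- s)). lra.
    + exact U0.
    + assert (Ps : Ff (g s)).
      { destruct (Rle_dec s0 s) as [Hl|Hl]. apply Good; lra.
        destruct P0 as [x [Sx Tx]]. exists x; split; auto. apply tl_trans with (g s0); auto.
        unfold tl, g; rewrite !uc_pt_uv, !vc_pt_uv.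
        assert (exp (- s0) < exp (- s)) by (apply exp_increasing; lra). lra. }
      destruct Ps as [x [Sx Tx]]. apply (achronal S U HU HC HS HSU (g s) x); auto.
  - simpl in Hb; contradiction.
Qed.

End NullMeets.

Lemma null_meets (S U : pt -> Prop) : open U -> causally_convex U -> cauchy_in S U ->
  (forall q, S q -> U q) -> forall p, U p ->
  exists w, U (pt_uv (uc p) w) /\ S (pt_uv (uc p) w).
Proof.
  intros HU HC HS HSU p Hp. apply NNPP; intros Hn.
  assert (Hno : forall w, U (pt_uv (uc p) w) -> ~ S (pt_uv (uc p) w)).
  { intros w H1 H2. apply Hn; exists w; auto. }
  assert (Wp : U (pt_uv (uc p) (vc p))) by (rewrite pt_uv_eta; auto).
  destruct (cover S U HU HC HS p Hp) as [H|[H|H]].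
  - apply (Hno (vc p)); auto. rewrite pt_uv_eta; auto.
  - apply (past_case S U p HU HC HS HSU Hp Hno H).
  - apply (future_case S U p HU HC HS HSU Hp Hno H).
Qed.

Lemma smooth1_ex f a : smooth1 f -> ex_derive f a.
Proof. intros H. exact (H 1%nat a). Qed.

Lemma St_null_ord St Ut q1 q2 : cauchy_object St Ut -> St q1 -> St q2 ->
  uc q1 = uc q2 -> vc q1 < vc q2 -> False.
Proof.
  intros [HU [HC [HSU [Hsp HS]]]] S1 S2 Eu Ev.
  destruct (Hsp q1 S1) as [W [s [HW [Wq [[Hs1 Hs2] [Hvel [Hinj [Hin [Hsurj _]]]]]]]]].
  destruct (Hsurj q1 S1 Wq) as [a0 Ha0].
  set (f1 := fun a => fst (s a)). set (f2 := fun a => snd (s a)).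
  assert (E1 : ex_derive f1 a0) by (apply smooth1_ex; auto).
  assert (E2 : ex_derive f2 a0) by (apply smooth1_ex; auto).
  set (k := Derive f1 a0 - Derive f2 a0).
  assert (Hk : k <> 0).
  { intros Hk0. specialize (Hvel a0). unfold gM, du, dv, velocity in Hvel; simpl in Hvel.
    fold f1 f2 in Hvel. unfold k in Hk0.
    assert (Derive f1 a0 = Derive f2 a0) by lra. rewrite H in Hvel.
    replace ((Derive f2 a0 - Derive f2 a0) * (Derive f2 a0 + Derive f2 a0) +
      (Derive f2 a0 + Derive f2 a0) * (Derive f2 a0 - Derive f2 a0)) with 0 in Hvel by ring. lra. }
  assert (Du : derivable_pt_lim (fun a => f1 a - f2 a) a0 k).
  { apply is_derive_Reals. unfold k. apply (is_derive_minus f1 f2); apply Derive_correct; auto. }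
  pose proof (ex_derive_continuous (fun a => f1 a + f2 a) a0 (ex_derive_plus f1 f2 a0 E1 E2)) as Cv.
  destruct (Du (Rabs k / 2)) as [d1 Hd1]. { apply Rdiv_lt_0_compat. apply Rabs_pos_lt; auto. lra. }
  destruct (cont_eps _ _ Cv (vc q2 - vc q1)) as [d2 [Hd2 Hd2']]. lra.
  set (m := Rmin d1 d2). assert (Hm : 0 < m) by (apply Rmin_pos; auto; apply cond_pos).
  assert (Hm1 : m <= d1) by apply Rmin_l. assert (Hm2 : m <= d2) by apply Rmin_r.
  assert (Key : exists h, h <> 0 /\ Rabs h < m /\ f1 (a0 + h) - f2 (a0 + h) < f1 a0 - f2 a0).
  { destruct (Rlt_or_le 0 k) as [Kp|Kn].
    - exists (- m / 2). assert (hne : - m / 2 <> 0) by lra.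
      assert (hab : Rabs (- m / 2) < m) by (rewrite Rabs_left; lra).
      split; auto. split; auto.
      specialize (Hd1 _ hne (Rlt_le_trans _ _ _ hab Hm1)).
      rewrite (Rabs_right k) in Hd1 by lra. apply Rabs_def2 in Hd1. destruct Hd1 as [Hd1 Hd1'].
      set (D := f1 (a0 + - m / 2) - f2 (a0 + - m / 2) - (f1 a0 - f2 a0)) in *.
      assert (0 < D / (- m / 2)) by lra.
      assert (D < 0).
      { apply Rnot_le_lt; intros HD. assert (D / (- m / 2) <= 0); [|lra].
        unfold Rdiv. apply Rmult_le_0_l; auto. apply Rlt_le, Rinv_lt_0_compat; lra. }
      unfold D in H0; lra.
    - assert (Kn' : k < 0) by lra.
      exists (m / 2). assert (hne : m / 2 <> 0) by lra.
      assert (hab : Rabs (m / 2) < m) by (rewrite Rabs_right; lra).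
      split; auto. split; auto.
      specialize (Hd1 _ hne (Rlt_le_trans _ _ _ hab Hm1)).
      rewrite (Rabs_left k) in Hd1 by lra. apply Rabs_def2 in Hd1. destruct Hd1 as [Hd1 Hd1'].
      set (D := f1 (a0 + m / 2) - f2 (a0 + m / 2) - (f1 a0 - f2 a0)) in *.
      assert (D / (m / 2) < 0) by lra.
      assert (D < 0).
      { apply Rnot_le_lt; intros HD. assert (0 <= D / (m / 2)); [|lra].
        unfold Rdiv. apply Rmult_le_pos; auto. apply Rlt_le, Rinv_0_lt_compat; lra. }
      unfold D in H0; lra. }
  destruct Key as [h [Hh0 [Hh1 Hh2]]].
  assert (Hv : Rabs (f1 (a0 + h) + f2 (a0 + h) - (f1 a0 + f2 a0)) < vc q2 - vc q1).
  { apply Hd2'. replace (a0 + h - a0) with h by ring. lra. }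
  apply Rabs_def2 in Hv. destruct Hv as [Hv _].
  destruct (Hin (a0 + h)) as [Sr _].
  apply (achronal St Ut HU HC HS HSU (s (a0 + h)) q2); auto.
  unfold tl, uc, vc, tc, xc. unfold f1, f2 in *. rewrite Ha0 in *.
  unfold uc, vc, tc, xc in Eu, Hv. split; lra.
Qed.

Lemma St_null_eq St Ut q1 q2 : cauchy_object St Ut -> St q1 -> St q2 ->
  uc q1 = uc q2 -> q1 = q2.
Proof.
  intros Hc S1 S2 Eu. destruct (Rtotal_order (vc q1) (vc q2)) as [H|[H|H]].
  - exfalso; apply (St_null_ord St Ut q1 q2); auto.
  - apply pt_eq_uv; auto.
  - exfalso; apply (St_null_ord St Ut q2 q1); auto.
Qed.

Lemma smooth_diff (U : pt -> Prop) (f : pt -> R) (x y : R) :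
  open U -> smooth_on U f -> U (x, y) ->
  differentiable_pt_lim (fun a b => f (a, b)) x y (Dt f (x, y)) (Dx f (x, y)).
Proof.
  intros HU Hf Hp. apply filterdiff_differentiable_pt_lim.
  assert (H := is_derive_filterdiff (fun a b => f (a, b)) x y (fun a b => Dt f (a, b)) (Dx f (x, y))).
  assert (E : forall u : R * R, f (fst u, snd u) = f u) by (intros [a b]; reflexivity).
  apply H.
  - specialize (HU _ Hp). apply locally_pt in HU. apply locally_pt. destruct HU as [e He].
    exists e. intros q H1 H2. specialize (He q H1 H2). destruct q as [a b]. simpl.
    apply Derive_correct. destruct (Hf nil (a, b) He) as [E1 _]. exact E1.
  - apply Derive_correct. destruct (Hf nil (x, y) Hp) as [_ [E2 _]]. exact E2.
  - destruct (Hf (cons true nil) (x, y) Hp) as [_ [_ C]]. simpl in C.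
    apply continuous_ext with (Dt f). intros [a b]; reflexivity. exact C.
Qed.

Lemma dir_deriv (U : pt -> Prop) (f : pt -> R) a b X1 X2 l0 :
  open U -> smooth_on U f -> U (a + l0 * X1, b + l0 * X2) ->
  is_derive (fun l => f (a + l * X1, b + l * X2)) l0
    (Dt f (a + l0 * X1, b + l0 * X2) * X1 + Dx f (a + l0 * X1, b + l0 * X2) * X2).
Proof.
  intros HU Hf Hp. apply is_derive_Reals.
  apply (derivable_pt_lim_comp_2d (fun a b => f (a, b)) (fun l => a + l * X1) (fun l => b + l * X2)).
  - apply (smooth_diff U); auto.
  - apply is_derive_Reals. auto_derive; auto; ring.
  - apply is_derive_Reals. auto_derive; auto; ring.
Qed.

Lemma nullv_deriv (U : pt -> Prop) (f : pt -> R) u0 w0 :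
  open U -> smooth_on U f -> U (pt_uv u0 w0) ->
  is_derive (fun w => f (pt_uv u0 w)) w0 ((Dt f (pt_uv u0 w0) + Dx f (pt_uv u0 w0)) / 2).
Proof.
  intros HU Hf Hp.
  assert (E : forall w, pt_uv u0 w = (u0 / 2 + w * (1/2), - u0 / 2 + w * (1/2))).
  { intros w; unfold pt_uv; f_equal; field. }
  apply is_derive_ext with (fun l => f (u0 / 2 + l * (1/2), - u0 / 2 + l * (1/2))).
  { intros t; rewrite E; auto. }
  replace ((Dt f (pt_uv u0 w0) + Dx f (pt_uv u0 w0)) / 2) with
    (Dt f (u0 / 2 + w0 * (1/2), - u0 / 2 + w0 * (1/2)) * (1/2) + Dx f (u0 / 2 + w0 * (1/2), - u0 / 2 + w0 * (1/2)) * (1/2)).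
  apply (dir_deriv U); auto. rewrite <- E; auto.
  rewrite <- E. field.
Qed.

Lemma nullu_deriv (U : pt -> Prop) (f : pt -> R) u0 w0 :
  open U -> smooth_on U f -> U (pt_uv u0 w0) ->
  is_derive (fun u => f (pt_uv u w0)) u0 ((Dt f (pt_uv u0 w0) - Dx f (pt_uv u0 w0)) / 2).
Proof.
  intros HU Hf Hp.
  assert (E : forall u, pt_uv u w0 = (w0 / 2 + u * (1/2), w0 / 2 + u * (-1/2))).
  { intros u; unfold pt_uv; f_equal; field. }
  apply is_derive_ext with (fun l => f (w0 / 2 + l * (1/2), w0 / 2 + l * (-1/2))).
  { intros t; rewrite E; auto. }
  replace ((Dt f (pt_uv u0 w0) - Dx f (pt_uv u0 w0)) / 2) with
    (Dt f (w0 / 2 + u0 * (1/2), w0 / 2 + u0 * (-1/2)) * (1/2) + Dx f (w0 / 2 + u0 * (1/2), w0 / 2 + u0 * (-1/2)) * (-1/2)).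
  apply (dir_deriv U); auto. rewrite <- E; auto.
  rewrite <- E. field.
Qed.

Lemma const_of_deriv0 (g : R -> R) a b :
  (forall x, Rmin a b <= x <= Rmax a b -> is_derive g x 0) -> g a = g b.
Proof.
  intros H. destruct (MVT_gen g a b (fun _ => 0)) as [c [_ Hc]].
  - intros x Hx. apply H; lra.
  - intros x Hx. apply continuity_pt_filterlim. apply (ex_derive_continuous g).
    eexists; apply H; auto.
  - lra.
Qed.

Section Chi.
Variables (chi : pt -> pt) (U Ut : pt -> Prop) (oml omr : pt -> R).
Hypotheses (HU : open U) (Hadm : conf_admissible chi U Ut)
  (Hdu : pullback_du chi U oml) (Hdv : pullback_dv chi U omr).

Definition c1 q := fst (chi q).
Definition c2 q := snd (chi q).

Lemma c1_smooth : smooth_on U c1.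
Proof. destruct Hadm as [H _]; exact H. Qed.
Lemma c2_smooth : smooth_on U c2.
Proof. destruct Hadm as [_ [H _]]; exact H. Qed.

Lemma partials p : U p ->
  Dt c1 p - Dt c2 p = oml p /\ Dx c1 p - Dx c2 p = - oml p /\
  Dt c1 p + Dt c2 p = omr p /\ Dx c1 p + Dx c2 p = omr p.
Proof.
  intros Hp.
  pose proof (Hdu p (1, 0) Hp) as A1. pose proof (Hdu p (0, 1) Hp) as A2.
  pose proof (Hdv p (1, 0) Hp) as A3. pose proof (Hdv p (0, 1) Hp) as A4.
  unfold du, dv, dchi in *; simpl in *. fold (c1) (c2) in *.
  repeat split; lra.
Qed.

Lemma om_pos p : U p -> 0 < oml p /\ 0 < omr p.
Proof.
  intros Hp. destruct (partials p Hp) as [P1 [P2 [P3 P4]]].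
  destruct Hadm as [_ [_ [_ [_ [_ [_ [_ [_ [_ [Hto _]]]]]]]]]].
  assert (FT : future_timelike (1, 0)).
  { unfold future_timelike, gM, du, dv; simpl; lra. }
  specialize (Hto p (1, 0) Hp FT). unfold future_timelike, gM, du, dv, dchi in Hto; simpl in Hto.
  change (Dt (fun q => fst (chi q)) p) with (Dt c1 p) in Hto.
  change (Dt (fun q => snd (chi q)) p) with (Dt c2 p) in Hto.
  change (Dx (fun q => fst (chi q)) p) with (Dx c1 p) in Hto.
  change (Dx (fun q => snd (chi q)) p) with (Dx c2 p) in Hto.
  destruct Hto as [T1 T2].
  assert (Ea : Dt c1 p = (oml p + omr p) / 2) by lra.
  assert (Eb : Dt c2 p = (omr p - oml p) / 2) by lra.
  rewrite Ea, Eb in T1. rewrite Ea in T2.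
  assert (T3 : 0 < oml p * omr p) by nra.
  assert (T4 : 0 < oml p + omr p) by lra.
  split; nra.
Qed.

Lemma u_chi_v u0 w0 : U (pt_uv u0 w0) -> is_derive (fun w => uc (chi (pt_uv u0 w))) w0 0.
Proof.
  intros Hp. destruct (partials _ Hp) as [P1 [P2 [P3 P4]]].
  apply is_derive_ext with (fun w => c1 (pt_uv u0 w) - c2 (pt_uv u0 w)).
  { intros t; unfold c1, c2, uc, tc, xc; auto. }
  replace 0 with ((Dt c1 (pt_uv u0 w0) + Dx c1 (pt_uv u0 w0)) / 2 - (Dt c2 (pt_uv u0 w0) + Dx c2 (pt_uv u0 w0)) / 2) by lra.
  apply (is_derive_minus (fun w => c1 (pt_uv u0 w)) (fun w => c2 (pt_uv u0 w))).
  apply (nullv_deriv U); auto; apply c1_smooth.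
  apply (nullv_deriv U); auto; apply c2_smooth.
Qed.

Lemma v_chi_v u0 w0 : U (pt_uv u0 w0) -> is_derive (fun w => vc (chi (pt_uv u0 w))) w0 (omr (pt_uv u0 w0)).
Proof.
  intros Hp. destruct (partials _ Hp) as [P1 [P2 [P3 P4]]].
  apply is_derive_ext with (fun w => c1 (pt_uv u0 w) + c2 (pt_uv u0 w)).
  { intros t; unfold c1, c2, vc, tc, xc; auto. }
  replace (omr (pt_uv u0 w0)) with ((Dt c1 (pt_uv u0 w0) + Dx c1 (pt_uv u0 w0)) / 2 + (Dt c2 (pt_uv u0 w0) + Dx c2 (pt_uv u0 w0)) / 2) by lra.
  apply (is_derive_plus (fun w => c1 (pt_uv u0 w)) (fun w => c2 (pt_uv u0 w))).
  apply (nullv_deriv U); auto; apply c1_smooth.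
  apply (nullv_deriv U); auto; apply c2_smooth.
Qed.

Lemma u_chi_u u0 w0 : U (pt_uv u0 w0) -> is_derive (fun u => uc (chi (pt_uv u w0))) u0 (oml (pt_uv u0 w0)).
Proof.
  intros Hp. destruct (partials _ Hp) as [P1 [P2 [P3 P4]]].
  apply is_derive_ext with (fun u => c1 (pt_uv u w0) - c2 (pt_uv u w0)).
  { intros t; unfold c1, c2, uc, tc, xc; auto. }
  replace (oml (pt_uv u0 w0)) with ((Dt c1 (pt_uv u0 w0) - Dx c1 (pt_uv u0 w0)) / 2 - (Dt c2 (pt_uv u0 w0) - Dx c2 (pt_uv u0 w0)) / 2) by lra.
  apply (is_derive_minus (fun u => c1 (pt_uv u w0)) (fun u => c2 (pt_uv u w0))).
  apply (nullu_deriv U); auto; apply c1_smooth.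
  apply (nullu_deriv U); auto; apply c2_smooth.
Qed.

Lemma u_chi_const u0 w1 w2 : (forall w, Rmin w1 w2 <= w <= Rmax w1 w2 -> U (pt_uv u0 w)) ->
  uc (chi (pt_uv u0 w1)) = uc (chi (pt_uv u0 w2)).
Proof.
  intros H. apply (const_of_deriv0 (fun w => uc (chi (pt_uv u0 w)))).
  intros x Hx. apply u_chi_v; auto.
Qed.

Lemma box_uv u0 w : U (pt_uv u0 w) -> exists d, 0 < d /\
  forall a b, Rabs a < d -> Rabs b < d -> U (pt_uv (u0 + a) (w + b)).
Proof.
  intros Hp. destruct (open_box U _ HU Hp) as [d [Hd HdU]]. exists d; split; auto.
  intros a b Ha Hb. apply HdU; unfold pt_uv; simpl.
  - replace ((u0 + a + (w + b)) / 2 - (u0 + w) / 2) with (a/2 + b/2) by field.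
    eapply Rle_lt_trans. apply Rabs_triang. unfold Rdiv; rewrite !Rabs_mult, (Rabs_right (/2)) by lra. lra.
  - replace ((w + b - (u0 + a)) / 2 - (w - u0) / 2) with (b/2 + - (a/2)) by field.
    eapply Rle_lt_trans. apply Rabs_triang. rewrite Rabs_Ropp. unfold Rdiv; rewrite !Rabs_mult, (Rabs_right (/2)) by lra. lra.
Qed.

Lemma oml_locconst u0 w : U (pt_uv u0 w) -> exists d, 0 < d /\
  forall b, Rabs b < d -> oml (pt_uv u0 (w + b)) = oml (pt_uv u0 w).
Proof.
  intros Hp. destruct (box_uv u0 w Hp) as [d [Hd Hbox]]. exists d; split; auto.
  intros b Hb.
  assert (Hp' : U (pt_uv u0 (w + b))) by (rewrite <- (Rplus_0_r u0); apply Hbox; auto; rewrite Rabs_R0; lra).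
  assert (D1 := u_chi_u u0 (w + b) Hp').
  assert (D2 := u_chi_u u0 w Hp).
  assert (Eloc : locally u0 (fun u => uc (chi (pt_uv u (w + b))) = uc (chi (pt_uv u w)))).
  { apply locally_R. exists (mkposreal d Hd). intros u Hu; simpl in Hu.
    apply u_chi_const. intros w' Hw'.
    replace u with (u0 + (u - u0)) by ring. replace w' with (w + (w' - w)) by ring.
    apply Hbox; auto.
    destruct (Rle_dec w (w + b)).
    - rewrite Rmin_right, Rmax_left in Hw' by lra. rewrite Rabs_right by lra.
      destruct (Rle_dec 0 b). rewrite Rabs_right in Hb; lra. rewrite Rabs_left in Hb; lra.
    - rewrite Rmin_left, Rmax_right in Hw' by lra. destruct (Rle_dec w' w).
      rewrite Rabs_left1 by lra. rewrite Rabs_left in Hb; lra.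
      rewrite Rabs_right by lra. lra. }
  apply (is_derive_ext_loc _ _ _ _ Eloc) in D1.
  apply is_derive_unique in D1. apply is_derive_unique in D2. rewrite <- D1, <- D2; reflexivity.
Qed.

Lemma oml_const u0 w1 w2 : (forall w, Rmin w1 w2 <= w <= Rmax w1 w2 -> U (pt_uv u0 w)) ->
  oml (pt_uv u0 w1) = oml (pt_uv u0 w2).
Proof.
  intros H. apply (const_of_deriv0 (fun w => oml (pt_uv u0 w))).
  intros x Hx. destruct (oml_locconst u0 x (H x Hx)) as [d [Hd Hc]].
  apply is_derive_ext_loc with (fun _ => oml (pt_uv u0 x)).
  - apply locally_R. exists (mkposreal d Hd). intros y Hy; simpl in Hy.
    replace y with (x + (y - x)) by ring. rewrite Hc; auto.
  - auto_derive; auto.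
Qed.

End Chi.

Lemma is_RInt_zero_on (f : R -> R) a b : (forall x, Rmin a b < x < Rmax a b -> f x = 0) -> is_RInt f a b 0.
Proof.
  intros H. apply is_RInt_ext with (fun _ => 0).
  intros x Hx; symmetry; auto.
  pose proof (is_RInt_const (V:=R_NormedModule) a b 0) as H0.
  change (scal (b - a) 0) with ((b - a) * 0) in H0. rewrite Rmult_0_r in H0. exact H0.
Qed.

Lemma RInt_gen_supp (f : R -> R) a b : a <= b -> (forall x, x < a \/ b < x -> f x = 0) ->
  ex_RInt f a b -> RInt_gen f (Rbar_locally m_infty) (Rbar_locally p_infty) = RInt f a b.
Proof.
  intros Hab Hz Hex. apply is_RInt_gen_unique.
  intros P HP. simpl.
  apply (Filter_prod _ _ _ (fun x => x < a) (fun y => b < y)).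
  - exists a; auto.
  - exists b; auto.
  - intros x y Hx Hy. exists (RInt f a b). split; [| apply locally_singleton; auto]. simpl.
    assert (H1 : is_RInt f x a 0).
    { apply is_RInt_zero_on. intros z Hz'. rewrite Rmin_left, Rmax_right in Hz' by lra. apply Hz; lra. }
    assert (H2 : is_RInt f b y 0).
    { apply is_RInt_zero_on. intros z Hz'. rewrite Rmin_left, Rmax_right in Hz' by lra. apply Hz; lra. }
    assert (H3 := RInt_correct f a b Hex).
    assert (H4 := is_RInt_Chasles f x a b 0 (RInt f a b) H1 H3).
    assert (H5 := is_RInt_Chasles f x b y _ 0 H4 H2).
    replace (RInt f a b) with (plus (plus 0 (RInt f a b)) 0); auto.
    unfold plus; simpl. ring.
Qed.

Lemma cont_pt_uv u0 w0 : continuous (fun w => pt_uv u0 w) w0.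
Proof.
  intros P HP. apply locally_pt in HP. destruct HP as [e He].
  apply locally_R. exists e. intros y Hy. apply He; unfold pt_uv; simpl.
  - replace ((u0 + y) / 2 - (u0 + w0) / 2) with ((y - w0) / 2) by field.
    unfold Rdiv; rewrite Rabs_mult, (Rabs_right (/2)) by lra. pose proof (cond_pos e). lra.
  - replace ((y - u0) / 2 - (w0 - u0) / 2) with ((y - w0) / 2) by field.
    unfold Rdiv; rewrite Rabs_mult, (Rabs_right (/2)) by lra. pose proof (cond_pos e). lra.
Qed.

Lemma cont_comp_pt_uv (f : pt -> R) u0 w0 : continuous f (pt_uv u0 w0) ->
  continuous (fun w => f (pt_uv u0 w)) w0.
Proof. intros H. apply (continuous_comp (fun w => pt_uv u0 w) f); auto. apply cont_pt_uv. Qed.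

Lemma support_line (U K : pt -> Prop) (h : pt -> R) u0 w0 :
  causally_convex U -> open U -> compact2 K -> (forall p, K p -> U p) -> (forall p, ~ K p -> h p = 0) ->
  U (pt_uv u0 w0) ->
  exists a b, a <= b /\ U (pt_uv u0 a) /\ U (pt_uv u0 b) /\
    forall w, w < a \/ b < w -> h (pt_uv u0 w) = 0.
Proof.
  intros HC HU HK HKU Hh Hw0.
  set (W := fun w => U (pt_uv u0 w)).
  set (O := fun (i : R * R) (p : pt) => (W (fst i) /\ W (snd i)) /\ (uc p <> u0 \/ (fst i < vc p < snd i))).
  assert (Oopen : forall i, open (O i)).
  { intros i p [Hi Hp]. apply locally_pt. destruct Hp as [Hp|Hp].
    - assert (He : 0 < Rabs (uc p - u0) / 2) by (apply Rdiv_lt_0_compat; [apply Rabs_pos_lt; lra|lra]).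
      exists (mkposreal _ He). intros q H1 H2; simpl in H1, H2. split; auto. left.
      intros Eq. unfold uc, tc, xc in *. rewrite <- Eq in H1, H2. revert H1 H2. unfold Rabs.
      repeat destruct Rcase_abs; lra.
    - set (e := Rmin (vc p - fst i) (snd i - vc p) / 2).
      assert (He : 0 < e) by (unfold e; apply Rdiv_lt_0_compat; [apply Rmin_pos; lra|lra]).
      exists (mkposreal _ He). intros q H1 H2; simpl in H1, H2. split; auto. right.
      unfold vc, tc, xc in *.
      pose proof (Rmin_l (vc p - fst i) (snd i - vc p)). pose proof (Rmin_r (vc p - fst i) (snd i - vc p)).
      unfold vc, tc, xc in *. apply Rabs_def2 in H1. apply Rabs_def2 in H2. unfold e in *. lra. }
  assert (Ocover : forall p, K p -> exists i, O i p).
  { intros p Kp. destruct (Req_dec (uc p) u0) as [E|E].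
    - assert (Wp : W (vc p)) by (unfold W; rewrite <- E, pt_uv_eta; auto).
      destruct (open_box U _ HU Wp) as [d [Hd Hbox]].
      exists (vc p - d/2, vc p + d/2). split; [split|]; simpl.
      + unfold W; apply Hbox; unfold pt_uv; simpl.
        replace ((u0 + (vc p - d / 2)) / 2 - (u0 + vc p) / 2) with (- (d/4)) by field.
        rewrite Rabs_Ropp, Rabs_right; lra.
        replace ((vc p - d / 2 - u0) / 2 - (vc p - u0) / 2) with (- (d/4)) by field.
        rewrite Rabs_Ropp, Rabs_right; lra.
      + unfold W; apply Hbox; unfold pt_uv; simpl.
        replace ((u0 + (vc p + d / 2)) / 2 - (u0 + vc p) / 2) with (d/4) by field.
        rewrite Rabs_right; lra.
        replace ((vc p + d / 2 - u0) / 2 - (vc p - u0) / 2) with (d/4) by field.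
        rewrite Rabs_right; lra.
      + right; lra.
    - exists (w0, w0). split; [split|]; auto. }
  destruct (HK (R * R)%type O Oopen Ocover) as [l Hl].
  assert (Fa : forall l : list (R * R), exists a, W a /\ forall i, In i l -> W (fst i) -> a <= fst i).
  { intros l0. induction l0 as [|i l0 [a' [Wa' Ha']]].
    - exists w0; split; auto. intros i [].
    - destruct (classic (W (fst i))) as [Wi|Wi].
      + exists (Rmin (fst i) a'). split.
        * unfold Rmin; destruct (Rle_dec (fst i) a'); auto.
        * intros j [<-|Hj] Wj. apply Rmin_l. eapply Rle_trans. apply Rmin_r. auto.
      + exists a'. split; auto. intros j [<-|Hj] Wj. contradiction. auto. }
  assert (Fb : forall l : list (R * R), exists b, W b /\ forall i, In i l -> W (snd i) -> snd i <= b).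
  { intros l0. induction l0 as [|i l0 [a' [Wa' Ha']]].
    - exists w0; split; auto. intros i [].
    - destruct (classic (W (snd i))) as [Wi|Wi].
      + exists (Rmax (snd i) a'). split.
        * unfold Rmax; destruct (Rle_dec (snd i) a'); auto.
        * intros j [<-|Hj] Wj. apply Rmax_l. eapply Rle_trans. 2: apply Rmax_r. auto.
      + exists a'. split; auto. intros j [<-|Hj] Wj. contradiction. auto. }
  destruct (Fa l) as [a [Wa Ha]]. destruct (Fb l) as [b [Wb Hb]].
  assert (Hz : forall w, w < a \/ b < w -> h (pt_uv u0 w) = 0).
  { intros w Hw. apply NNPP; intros Hnz.
    assert (Kw : K (pt_uv u0 w)) by (apply NNPP; intros Hk; apply Hnz; auto).
    destruct (Hl _ Kw) as [i [Hi [[W1 W2] Hi2]]].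
    rewrite uc_pt_uv, vc_pt_uv in Hi2. destruct Hi2 as [Hi2|Hi2]. apply Hi2; auto.
    specialize (Ha i Hi W1). specialize (Hb i Hi W2). lra. }
  destruct (Rle_dec a b) as [Hab|Hab].
  - exists a, b. auto.
  - exists w0, w0. split. lra. split; auto. split; auto.
    intros w Hw. apply Hz. lra.
Qed.

Lemma cont_of_eps (f : R -> R) x :
  (forall eps, 0 < eps -> exists d, 0 < d /\ forall y, Rabs (y - x) < d -> Rabs (f y - f x) < eps) ->
  continuous f x.
Proof.
  intros H P HP. apply locally_R in HP. destruct HP as [e He].
  destruct (H e (cond_pos e)) as [d [Hd Hd']]. apply locally_R. exists (mkposreal d Hd).
  intros y Hy. apply He. apply Hd'. exact Hy.
Qed.

Lemma seg_U (U : pt -> Prop) u0 w1 w2 : causally_convex U -> U (pt_uv u0 w1) -> U (pt_uv u0 w2) ->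
  forall w, Rmin w1 w2 <= w <= Rmax w1 w2 -> U (pt_uv u0 w).
Proof.
  intros HC H1 H2 w Hw. unfold Rmin, Rmax in Hw. destruct (Rle_dec w1 w2).
  - apply (HC (pt_uv u0 w1) (pt_uv u0 w2)); auto; unfold causal_le; rewrite !uc_pt_uv, !vc_pt_uv; lra.
  - apply (HC (pt_uv u0 w2) (pt_uv u0 w1)); auto; unfold causal_le; rewrite !uc_pt_uv, !vc_pt_uv; lra.
Qed.

Lemma is_RInt_R_unique (g : R -> R) a b l1 l2 : is_RInt g a b l1 -> is_RInt g a b l2 -> l1 = l2.
Proof. intros H1 H2. pose proof (is_RInt_unique (V:=R_CompleteNormedModule) g a b l1 H1).
 pose proof (is_RInt_unique (V:=R_CompleteNormedModule) g a b l2 H2). congruence. Qed.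

Lemma continuity_pt_of_derive (g : R -> R) x l : is_derive g x l -> continuity_pt g x.
Proof. intros H. apply continuity_pt_filterlim. apply (ex_derive_continuous g). exists l; auto. Qed.

Theorem mainTheorem11 (mu : R) (S U St Ut : pt -> Prop) (chi : pt -> pt)
  (oml omr : pt -> R) :
  cauchy_object S U -> cauchy_object St Ut ->
  cauchy_morphism S U St Ut chi ->
  pullback_du chi U oml -> pullback_dv chi U omr ->
  forall h : pt -> R, test_function U h ->
  forall q : pt, St q ->
    eta (D_mu0 mu U chi oml omr h) q = D_ell mu S chi oml (eta h) q.
Proof.
  intros Hc Hct Hm Hdu Hdv h Ht q Sq.
  destruct Hc as [HU [HC [HSU [Hsp HS]]]].
  destruct Hm as [Hadm [HSSt _]].
  assert (Hinj : forall p1 p2, U p1 -> U p2 -> chi p1 = chi p2 -> p1 = p2).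
  { destruct Hadm as [_ [_ [H _]]]; exact H. }
  destruct Ht as [Hhs [K [HK [HKU HKh]]]].
  assert (Hhc : forall p, continuous h p).
  { intros p. destruct (Hhs nil p I) as [_ [_ C]]. exact C. }
  assert (KEY : forall p, U p -> exists ps, S ps /\ uc ps = uc p /\ uc (chi ps) = uc (chi p)).
  { intros p Hp. destruct (null_meets S U HU HC HS HSU p Hp) as [w [Uw Sw]].
    exists (pt_uv (uc p) w). split; auto. split. apply uc_pt_uv.
    replace (chi p) with (chi (pt_uv (uc p) (vc p))) by (rewrite pt_uv_eta; auto).
    apply (u_chi_const chi U Ut oml omr HU Hadm Hdu Hdv).
    apply seg_U; auto. rewrite pt_uv_eta; auto. }
  destruct (classic (exists p0, S p0 /\ chi p0 = q)) as [[p0 [Sp0 Ep0]]|Hno].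
  2: {
    assert (RHS : D_ell mu S chi oml (eta h) q = 0).
    { unfold D_ell, push. destruct (excluded_middle_informative _) as [H|H]; auto.
      exfalso; apply Hno; destruct H as [p [H1 H2]]; exists p; auto. }
    rewrite RHS. unfold eta.
    assert (Z : forall w, D_mu0 mu U chi oml omr h (pt_uv (uc q) w) = 0).
    { intros w. unfold D_mu0, push. destruct (excluded_middle_informative _) as [H|H]; auto.
      exfalso. destruct H as [p [Up Ep]].
      destruct (KEY p Up) as [ps [Sps [_ Eu]]].
      apply Hno. exists ps. split; auto.
      apply (St_null_eq St Ut); auto. rewrite Eu, Ep, uc_pt_uv. auto. }
    rewrite (RInt_gen_supp _ 0 0); auto. apply (RInt_point (V:=R_CompleteNormedModule)). lra.
    apply ex_RInt_point. }
  set (u0 := uc p0). set (w0 := vc p0). set (c := uc q).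
  set (pt := fun w => pt_uv u0 w).
  assert (Ept0 : pt w0 = p0) by (unfold pt, u0, w0; apply pt_uv_eta).
  set (W := fun w => U (pt w)).
  assert (W0 : W w0) by (unfold W; rewrite Ept0; auto).
  destruct (support_line U K h u0 w0 HC HU HK HKU HKh W0) as [a [b [Hab [Wa [Wb Hsupp]]]]].
  assert (Wseg : forall w1 w2, W w1 -> W w2 -> forall w, Rmin w1 w2 <= w <= Rmax w1 w2 -> W w).
  { intros w1 w2 H1 H2 w Hw. apply (seg_U U u0 w1 w2); auto. }
  assert (F1 : forall w, W w -> uc (chi (pt w)) = c).
  { intros w Hw. unfold c. rewrite <- Ep0, <- Ept0.
    apply (u_chi_const chi U Ut oml omr HU Hadm Hdu Hdv). intros w' Hw'. apply (Wseg w w0); auto. }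
  set (G := fun w => vc (chi (pt w))).
  assert (F2 : forall w, W w -> chi (pt w) = pt_uv c (G w)).
  { intros w Hw. apply pt_eq_uv; rewrite ?uc_pt_uv, ?vc_pt_uv; auto. }
  assert (F3 : forall w, W w -> is_derive G w (omr (pt w))).
  { intros w Hw. apply (v_chi_v chi U Ut oml omr HU Hadm Hdu Hdv). exact Hw. }
  assert (F4 : forall w1 w2, W w1 -> W w2 -> w1 < w2 -> G w1 < G w2).
  { intros w1 w2 H1 H2 Hlt.
    destruct (MVT_gen G w1 w2 (fun w => omr (pt w))) as [xi [Hxi Exi]].
    - intros x Hx. apply F3. apply (Wseg w1 w2); auto. lra.
    - intros x Hx. apply (continuity_pt_of_derive G x (omr (pt x))). apply F3. apply (Wseg w1 w2); auto.
    - assert (Wxi : W xi) by (apply (Wseg w1 w2); auto).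
      destruct (om_pos chi U Ut oml omr Hadm Hdu Hdv (pt xi) Wxi) as [_ Hpos].
      assert (0 < omr (pt xi) * (w2 - w1)) by (apply Rmult_lt_0_compat; lra). lra. }
  assert (F4' : forall w1 w2, W w1 -> W w2 -> w1 <= w2 -> G w1 <= G w2).
  { intros w1 w2 H1 H2 [Hlt|<-]. left; apply F4; auto. right; auto. }
  assert (F5 : forall w, W w -> oml (pt w) = oml p0).
  { intros w Hw. rewrite <- Ept0. apply (oml_const chi U Ut oml omr HU Hadm Hdu Hdv).
    intros w' Hw'. apply (Wseg w w0); auto. }
  set (F := fun p => Rpower (oml p) (mu - 1) * / omr p * h p).
  set (f := fun y => D_mu0 mu U chi oml omr h (pt_uv c y)).
  assert (F6 : forall w, W w -> f (G w) = F (pt w)).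
  { intros w Hw. unfold f, D_mu0, push. destruct (excluded_middle_informative _) as [H|H].
    - destruct (constructive_indefinite_description _ H) as [p1 [Up1 Ep1]]. simpl.
      rewrite <- F2 in Ep1 by auto. apply Hinj in Ep1; auto. subst p1. reflexivity.
    - exfalso. apply H. exists (pt w). split; auto. }
  assert (F7 : forall y, f y <> 0 -> exists w, W w /\ G w = y).
  { intros y Hy. unfold f, D_mu0, push in Hy. destruct (excluded_middle_informative _) as [H|H].
    - destruct H as [p [Up Ep]].
      destruct (KEY p Up) as [ps [Sps [Eu1 Eu2]]].
      assert (E1 : chi ps = q).
      { apply (St_null_eq St Ut); auto. rewrite Eu2, Ep, uc_pt_uv. auto. }
      rewrite <- Ep0 in E1. apply Hinj in E1; auto. subst ps.
      exists (vc p). assert (Ep' : pt (vc p) = p) by (unfold pt, u0; rewrite Eu1; apply pt_uv_eta).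
      split. unfold W; rewrite Ep'; auto.
      unfold G. rewrite Ep', Ep, vc_pt_uv. auto.
    - exfalso; apply Hy; auto. }
  assert (F8 : forall y, y < G a \/ G b < y -> f y = 0).
  { intros y Hy. apply NNPP; intros Hnz. destruct (F7 y Hnz) as [w [Ww Ew]].
    subst y. rewrite F6 in Hnz by auto. unfold F in Hnz.
    destruct (Rlt_or_le w a) as [H1|H1].
    - apply Hnz. rewrite Hsupp; auto. ring.
    - destruct (Rlt_or_le b w) as [H2|H2].
      + apply Hnz. rewrite Hsupp; auto. ring.
      + pose proof (F4' a w Wa Ww H1). pose proof (F4' w b Ww Wb H2). lra. }
  set (dg := fun w => Dt (c1 chi) (pt w) + Dt (c2 chi) (pt w)).
  assert (Edg : forall w, W w -> dg w = omr (pt w)).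
  { intros w Hw. destruct (partials chi U oml omr Hdu Hdv (pt w) Hw) as [_ [_ [P3 _]]]. exact P3. }
  assert (Cdg : forall w, W w -> continuous dg w).
  { intros w Hw. unfold dg. apply (continuous_plus (fun w => Dt (c1 chi) (pt w)) (fun w => Dt (c2 chi) (pt w))).
    - apply cont_comp_pt_uv. destruct (c1_smooth chi U Ut Hadm (cons true nil) (pt w) Hw) as [_ [_ C]]. exact C.
    - apply cont_comp_pt_uv. destruct (c2_smooth chi U Ut Hadm (cons true nil) (pt w) Hw) as [_ [_ C]]. exact C. }
  set (K0 := Rpower (oml p0) (mu - 1)).
  set (Phi := fun w => K0 * / dg w * h (pt w)).
  assert (EPhi : forall w, W w -> F (pt w) = Phi w).
  { intros w Hw. unfold F, Phi, K0. rewrite F5, Edg; auto. }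
  assert (CPhi : forall w, W w -> continuous Phi w).
  { intros w Hw. unfold Phi.
    destruct (om_pos chi U Ut oml omr Hadm Hdu Hdv (pt w) Hw) as [_ Hpos].
    apply (continuous_mult (fun w => K0 * / dg w) (fun w => h (pt w))).
    apply (continuous_mult (fun _ => K0) (fun w => / dg w)).
    apply continuous_const. apply continuous_Rinv_comp. apply Cdg; auto. rewrite Edg; auto; lra.
    apply cont_comp_pt_uv. apply Hhc. }
  assert (Wopen : forall x, W x -> exists d, 0 < d /\ forall w, Rabs (w - x) < d -> W w).
  { intros x Hx. destruct (open_box U _ HU Hx) as [d [Hd Hbox]]. exists d; split; auto.
    intros w Hw. apply Hbox; unfold pt, pt_uv; simpl.
    - replace ((u0 + w) / 2 - (u0 + x) / 2) with ((w - x) / 2) by field.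
      unfold Rdiv; rewrite Rabs_mult, (Rabs_right (/2)) by lra. lra.
    - replace ((w - u0) / 2 - (x - u0) / 2) with ((w - x) / 2) by field.
      unfold Rdiv; rewrite Rabs_mult, (Rabs_right (/2)) by lra. lra. }
  assert (IVTG : forall x1 x2 y, W x1 -> W x2 -> x1 <= x2 -> G x1 <= y <= G x2 -> exists x, x1 <= x <= x2 /\ G x = y).
  { intros x1 x2 y H1 H2 H12 [Hy1 Hy2].
    destruct (Req_dec y (G x1)) as [E|E]. exists x1; split; [lra|auto].
    destruct (Req_dec y (G x2)) as [E'|E']. exists x2; split; [lra|auto].
    assert (x1 < x2) by (destruct H12 as [H12|H12]; auto; rewrite H12 in Hy1; exfalso; apply E'; lra).
    destruct (Ranalysis5.IVT_interv (fun x => G x - y) x1 x2) as [x [Hx Ex]]; auto.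
    - intros z Hz. apply continuity_pt_minus. apply (continuity_pt_of_derive G z (omr (pt z))).
      apply F3. apply (Wseg x1 x2); auto. rewrite Rmin_left, Rmax_right; lra.
      apply continuity_pt_const. intros u v; auto.
    - lra.
    - lra.
    - exists x; split; auto. lra. }
  assert (F9 : forall x, W x -> continuous f (G x)).
  { intros x Hx. apply cont_of_eps. intros eps He.
    destruct (Wopen x Hx) as [d0 [Hd0 Hd0']].
    destruct (cont_eps Phi x (CPhi x Hx) eps He) as [d1 [Hd1 Hd1']].
    set (dl := Rmin d0 d1 / 2).
    assert (Hdl : 0 < dl) by (unfold dl; apply Rdiv_lt_0_compat; [apply Rmin_pos|]; lra).
    assert (Hdl0 : dl < d0) by (unfold dl; pose proof (Rmin_l d0 d1); lra).
    assert (Hdl1 : dl < d1) by (unfold dl; pose proof (Rmin_r d0 d1); lra).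
    assert (Wm : W (x - dl)) by (apply Hd0'; rewrite Rabs_left; lra).
    assert (Wp : W (x + dl)) by (apply Hd0'; rewrite Rabs_right; lra).
    assert (G1 : G (x - dl) < G x) by (apply F4; auto; lra).
    assert (G2 : G x < G (x + dl)) by (apply F4; auto; lra).
    exists (Rmin (G x - G (x - dl)) (G (x + dl) - G x)). split.
    apply Rmin_pos; lra.
    intros y Hy. pose proof (Rmin_l (G x - G (x - dl)) (G (x + dl) - G x)).
    pose proof (Rmin_r (G x - G (x - dl)) (G (x + dl) - G x)).
    apply Rabs_def2 in Hy. destruct Hy as [Hy1 Hy2].
    destruct (IVTG (x - dl) (x + dl) y Wm Wp) as [w [Hw Ew]]. lra. lra.
    assert (Ww : W w) by (apply (Wseg (x - dl) (x + dl)); auto; rewrite Rmin_left, Rmax_right; lra).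
    subst y. rewrite !F6, !EPhi; auto. apply Hd1'. apply Rabs_def1; lra. }
  assert (Ga_le : G a <= G b) by (apply F4'; auto).
  assert (F10 : ex_RInt f (G a) (G b)).
  { apply (ex_RInt_continuous (V:=R_CompleteNormedModule)). intros z Hz. rewrite Rmin_left, Rmax_right in Hz by auto.
    destruct (IVTG a b z Wa Wb Hab Hz) as [x [Hx Ex]]. subst z. apply F9. apply (Wseg a b); auto.
    rewrite Rmin_left, Rmax_right; lra. }
  assert (LHS : eta (D_mu0 mu U chi oml omr h) q = RInt f (G a) (G b)).
  { unfold eta. fold c. apply (RInt_gen_supp f); auto. }
  set (Hl := fun w => h (pt w)).
  assert (ExH : forall a' b', ex_RInt Hl a' b').
  { intros a' b'. apply (ex_RInt_continuous (V:=R_CompleteNormedModule)). intros z _. apply cont_comp_pt_uv. apply Hhc. }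
  assert (Comp : is_RInt (fun y => scal (dg y) (f (G y))) a b (RInt f (G a) (G b))).
  { apply (is_RInt_comp (V:=R_CompleteNormedModule)).
    - intros x Hx. rewrite Rmin_left, Rmax_right in Hx by exact Hab.
      assert (Wx : W x) by (apply (Wseg a b); auto; rewrite Rmin_left, Rmax_right; lra).
      exact (F9 x Wx).
    - intros x Hx. rewrite Rmin_left, Rmax_right in Hx by exact Hab.
      assert (Wx : W x) by (apply (Wseg a b); auto; rewrite Rmin_left, Rmax_right; lra).
      split. rewrite (Edg x Wx). exact (F3 x Wx). exact (Cdg x Wx). }
  assert (Comp2 : is_RInt (fun y => scal K0 (Hl y)) a b (RInt f (G a) (G b))).
  { apply (is_RInt_ext (fun y => scal (dg y) (f (G y)))); [|exact Comp].
    intros x Hx. rewrite Rmin_left, Rmax_right in Hx by exact Hab.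
    assert (Wx : W x) by (apply (Wseg a b); auto; rewrite Rmin_left, Rmax_right; lra).
    rewrite (F6 x Wx), (EPhi x Wx). unfold Phi, Hl.
    change (dg x * (K0 * / dg x * h (pt x)) = K0 * h (pt x)).
    destruct (om_pos chi U Ut oml omr Hadm Hdu Hdv (pt x) Wx) as [_ Hpos].
    rewrite (Edg x Wx). field. lra. }
  assert (Comp3 : is_RInt (fun y => scal K0 (Hl y)) a b (scal K0 (RInt Hl a b))).
  { apply (is_RInt_scal (V:=R_NormedModule)). exact (RInt_correct (V:=R_CompleteNormedModule) Hl a b (ExH a b)). }
  assert (Eq1 : RInt f (G a) (G b) = K0 * RInt Hl a b).
  { exact (is_RInt_R_unique _ a b _ _ Comp2 Comp3). }
  assert (RHS : D_ell mu S chi oml (eta h) q = K0 * RInt Hl a b).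
  { unfold D_ell, push. destruct (excluded_middle_informative _) as [H|H].
    - destruct (constructive_indefinite_description _ H) as [p1 [Sp1 Ep1]]. simpl.
      rewrite <- Ep0 in Ep1. apply Hinj in Ep1; auto. subst p1.
      unfold K0. f_equal. unfold eta. fold u0.
      exact (RInt_gen_supp Hl a b Hab Hsupp (ExH a b)).
    - exfalso; apply H; exists p0; auto. }
  rewrite LHS, RHS, Eq1. reflexivity.
Qed.
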